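(* Let $f=f^\alpha$ be a developable strip along an arc-length parametrized $C^\infty$ embedded curve $\mathbf c:I\to\mathbb R^3$ with curvature $\kappa>0$, let $C=\mathbf c(I)$, and let $\epsilon>0$ be sufficiently small. Suppose $C$ has no symmetries, i.e. there is no isometry $T\neq\mathrm{id}$ of $\mathbb R^3$ with $T(C)=C$. Then for every $\delta\in(0,\epsilon]$, the set $\phi_f(\Omega_\delta)$ is not congruent to any subset of $\psi_f(\Omega_\epsilon)$; that is, there is no isometry $T$ of $\mathbb R^3$ with $T(\phi_f(\Omega_\delta))\subset\psi_f(\Omega_\epsilon)$. Here $\Omega_\delta=I\times(-\delta,\delta)$.
   Context: Space curves. For a $C^\infty$ curve $\mathbf c:I\to\mathbb R^3$, $I=[a,b]$, parametrized by arc length with curvature $\kappa=|\mathbf c''|>0$, set $\mathbf e=\mathbf c'$, $\mathbf n=\mathbf c''/\kappa$, $\mathbf b=\mathbf e\times\mathbf n$, and torsion $\tau:=\mathbf n'\cdot\mathbf b$. Developable strips. Given $C^\infty$ functions $\alpha,\beta$ on $I$ with $0<|\alpha(t)|<\pi/2$ and $0<\beta(t)<\pi$, the ruled surface is $f(t,v)=\mathbf c(t)+v\,\xi(t)$, $(t,v)\in I\times(-\epsilon,\epsilon)$, with $\xi=\cos\beta\,\mathbf e+\sin\beta(\cos\alpha\,\mathbf n+\sin\alpha\,\mathbf b)$; $\alpha$ is the first angular function. $f$ is developable iff $\cot\beta=(\alpha'+\tau)/(\kappa\sin\alpha)$; the developable strip with first angular function $\alpha$ is denoted $f^\alpha$.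 The dual of $f=f^\alpha$ is $\check f:=f^{-\alpha}$. Origami maps. $\phi_f(t,v)=f(t,v)$ for $v\ge0$ and $\phi_f(t,v)=\check f(t,v)$ for $v<0$; $\psi_f(t,v)=\check f(t,v)$ for $v\ge0$ and $\psi_f(t,v)=f(t,v)$ for $v<0$. *)

(* Defs.v *)
From Stdlib Require Import Reals.
Open Scope R_scope.

Record R3 := mkR3 { x1 : R; x2 : R; x3 : R }.

Definition vadd (u v : R3) : R3 := mkR3 (x1 u + x1 v) (x2 u + x2 v) (x3 u + x3 v).
Definition vscale (k : R) (u : R3) : R3 := mkR3 (k * x1 u) (k * x2 u) (k * x3 u).
Definition vsub (u v : R3) : R3 := mkR3 (x1 u - x1 v) (x2 u - x2 v) (x3 u - x3 v).
Definition dot (u v : R3) : R := x1 u * x1 v + x2 u * x2 v + x3 u * x3 v.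
Definition cross (u v : R3) : R3 :=
  mkR3 (x2 u * x3 v - x3 u * x2 v) (x3 u * x1 v - x1 u * x3 v) (x1 u * x2 v - x2 u * x1 v).
Definition vnorm (u : R3) : R := sqrt (dot u u).
Definition dist3 (u v : R3) : R := vnorm (vsub u v).

Definition deriv3 (c d : R -> R3) (t : R) : Prop :=
  derivable_pt_lim (fun s => x1 (c s)) t (x1 (d t)) /\
  derivable_pt_lim (fun s => x2 (c s)) t (x2 (d t)) /\
  derivable_pt_lim (fun s => x3 (c s)) t (x3 (d t)).

Definition smooth (f : R -> R) : Prop :=
  exists D : nat -> R -> R, (forall t, D O t = f t) /\
    forall n t, derivable_pt_lim (D n) t (D (S n) t).
Definition smooth3 (c : R -> R3) : Prop :=
  smooth (fun t => x1 (c t)) /\ smooth (fun t => x2 (c t)) /\ smooth (fun t => x3 (c t)).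

(* Frenet data, in terms of ce = c' and cdd = c'' *)
Definition curvature (cdd : R -> R3) (t : R) : R := vnorm (cdd t).
Definition normal (cdd : R -> R3) (t : R) : R3 := vscale (/ curvature cdd t) (cdd t).
Definition binormal (ce cdd : R -> R3) (t : R) : R3 := cross (ce t) (normal cdd t).
(* nd is the derivative n' of the normal *)
Definition torsion (ce cdd nd : R -> R3) (t : R) : R := dot (nd t) (binormal ce cdd t).

Definition ruling (ce cdd : R -> R3) (al be : R -> R) (t : R) : R3 :=
  vadd (vscale (cos (be t)) (ce t))
       (vscale (sin (be t)) (vadd (vscale (cos (al t)) (normal cdd t))
                                  (vscale (sin (al t)) (binormal ce cdd t)))).
Definition strip (c ce cdd : R -> R3) (al be : R -> R) (t v : R) : R3 :=
  vadd (c t) (vscale v (ruling ce cdd al be t)).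

(* be is the second angular function making the strip with first angular
   function al (with derivative ald) developable on [a,b]:
   0 < be < PI and cot be = (al' + tau)/(kappa sin al). *)
Definition developable_angle (a b : R) (ce cdd nd : R -> R3) (al ald be : R -> R) : Prop :=
  forall t, a <= t <= b ->
    0 < be t < PI /\
    cos (be t) / sin (be t) = (ald t + torsion ce cdd nd t) / (curvature cdd t * sin (al t)).

Definition negf (f : R -> R) : R -> R := fun t => - f t.

(* phi_f(Omega_delta), with f = f^al (second angle be) and dual f^{-al} (second angle bec) *)
Definition phi_img (a b : R) (c ce cdd : R -> R3) (al be bec : R -> R) (delta : R) (p : R3) : Prop :=
  exists t v, a <= t <= b /\
    ((0 <= v < delta /\ p = strip c ce cdd al be t v) \/
     (- delta < v < 0 /\ p = strip c ce cdd (negf al) bec t v)).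

Definition psi_img (a b : R) (c ce cdd : R -> R3) (al be bec : R -> R) (eps : R) (p : R3) : Prop :=
  exists t v, a <= t <= b /\
    ((0 <= v < eps /\ p = strip c ce cdd (negf al) bec t v) \/
     (- eps < v < 0 /\ p = strip c ce cdd al be t v)).

Definition isometry (T : R3 -> R3) : Prop := forall p q, dist3 (T p) (T q) = dist3 p q.

Definition no_symmetry (a b : R) (c : R -> R3) : Prop :=
  forall T, isometry T ->
    (forall t, a <= t <= b -> exists s, a <= s <= b /\ T (c t) = c s) ->
    (forall s, a <= s <= b -> exists t, a <= t <= b /\ T (c t) = c s) ->
    forall p, T p = p.

(* Main.v *)
Require Import Defs.
From Stdlib Require Import Reals.
Open Scope R_scope.

From Stdlib Require Import Reals Lra Psatz.
Open Scope R_scope.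

Ltac vunfold := unfold dot, cross, vadd, vscale, vsub in *; simpl in *.

Lemma R3_eta : forall u, u = mkR3 (x1 u) (x2 u) (x3 u).
Proof. intros [] ; reflexivity. Qed.

Lemma R3_ext : forall u v, x1 u = x1 v -> x2 u = x2 v -> x3 u = x3 v -> u = v.
Proof. intros [] [] ; simpl; intros; subst; reflexivity. Qed.

Lemma dot_comm u v : dot u v = dot v u.
Proof. vunfold; ring. Qed.
Lemma dot_ge0 u : 0 <= dot u u.
Proof. vunfold; nra. Qed.
Lemma dot_addl u v w : dot (vadd u v) w = dot u w + dot v w.
Proof. vunfold; ring. Qed.
Lemma dot_addr u v w : dot w (vadd u v) = dot w u + dot w v.
Proof. vunfold; ring. Qed.
Lemma dot_subl u v w : dot (vsub u v) w = dot u w - dot v w.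
Proof. vunfold; ring. Qed.
Lemma dot_subr u v w : dot w (vsub u v) = dot w u - dot w v.
Proof. vunfold; ring. Qed.
Lemma dot_scalel k u w : dot (vscale k u) w = k * dot u w.
Proof. vunfold; ring. Qed.
Lemma dot_scaler k u w : dot w (vscale k u) = k * dot w u.
Proof. vunfold; ring. Qed.

Lemma vnorm_ge0 u : 0 <= vnorm u.
Proof. apply sqrt_pos. Qed.
Lemma vnorm_sq u : vnorm u * vnorm u = dot u u.
Proof. unfold vnorm; apply sqrt_sqrt, dot_ge0. Qed.
Lemma vnorm_eq u r : 0 <= r -> dot u u = r * r -> vnorm u = r.
Proof. intros Hr H; unfold vnorm; rewrite H; apply sqrt_square; auto. Qed.

Lemma lagrange u v : dot (cross u v) (cross u v) = dot u u * dot v v - dot u v * dot u v.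
Proof. vunfold; ring. Qed.
Lemma cs_sq u v : dot u v * dot u v <= dot u u * dot v v.
Proof. pose proof (lagrange u v); pose proof (dot_ge0 (cross u v)); lra. Qed.

Lemma le_vnorm_of_sq u r : 0 <= r -> dot u u <= r * r -> vnorm u <= r.
Proof. intros Hr H. pose proof (vnorm_sq u). pose proof (vnorm_ge0 u). nra. Qed.
Lemma ge_vnorm_of_sq u r : 0 <= r -> r * r <= dot u u -> r <= vnorm u.
Proof. intros Hr H. pose proof (vnorm_sq u). pose proof (vnorm_ge0 u). nra. Qed.

Lemma cs_abs u v : Rabs (dot u v) <= vnorm u * vnorm v.
Proof.
  pose proof (cs_sq u v). pose proof (vnorm_sq u). pose proof (vnorm_sq v).
  pose proof (vnorm_ge0 u). pose proof (vnorm_ge0 v).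
  apply Rsqr_incr_0_var; [|nra]. unfold Rsqr. rewrite <- Rabs_mult, Rabs_mult, <- Rabs_mult.
  rewrite Rabs_mult. replace (Rabs (dot u v) * Rabs (dot u v)) with (dot u v * dot u v).
  2:{ rewrite <- Rabs_mult. rewrite Rabs_pos_eq; nra. } nra.
Qed.

Lemma dot_unit_le u v : vnorm v = 1 -> Rabs (dot u v) <= vnorm u.
Proof. intros H. pose proof (cs_abs u v). rewrite H in H0. lra. Qed.

Lemma vnorm_triangle u v : vnorm (vadd u v) <= vnorm u + vnorm v.
Proof.
  apply le_vnorm_of_sq. pose proof (vnorm_ge0 u); pose proof (vnorm_ge0 v); lra.
  rewrite dot_addl, !dot_addr. pose proof (cs_abs u v). rewrite (dot_comm v u).
  pose proof (vnorm_sq u). pose proof (vnorm_sq v). pose proof (Rle_abs (dot u v)). nra.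
Qed.

Lemma vnorm_scale k u : vnorm (vscale k u) = Rabs k * vnorm u.
Proof.
  apply vnorm_eq. pose proof (Rabs_pos k); pose proof (vnorm_ge0 u); nra.
  rewrite dot_scalel, dot_scaler. replace (Rabs k * vnorm u * (Rabs k * vnorm u)) with
  ((Rabs k * Rabs k) * (vnorm u * vnorm u)) by ring. rewrite <- Rabs_mult, vnorm_sq.
  rewrite Rabs_pos_eq; nra.
Qed.

Lemma vnorm_comp_bound u : vnorm u <= Rabs (x1 u) + Rabs (x2 u) + Rabs (x3 u).
Proof.
  apply le_vnorm_of_sq. pose proof (Rabs_pos (x1 u)); pose proof (Rabs_pos (x2 u)); pose proof (Rabs_pos (x3 u)); lra.
  unfold dot. pose proof (Rabs_pos (x1 u)); pose proof (Rabs_pos (x2 u)); pose proof (Rabs_pos (x3 u)).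
  assert (forall x, Rabs x * Rabs x = x * x) as Hs by (intros x; rewrite <- Rabs_mult; apply Rabs_pos_eq; nra).
  rewrite <- (Hs (x1 u)), <- (Hs (x2 u)), <- (Hs (x3 u)). nra.
Qed.

Lemma comp1_le u : Rabs (x1 u) <= vnorm u.
Proof. apply Rsqr_incr_0_var; [|apply vnorm_ge0]. unfold Rsqr. rewrite vnorm_sq, <- Rabs_mult, Rabs_pos_eq by nra. unfold dot; nra. Qed.
Lemma comp2_le u : Rabs (x2 u) <= vnorm u.
Proof. apply Rsqr_incr_0_var; [|apply vnorm_ge0]. unfold Rsqr. rewrite vnorm_sq, <- Rabs_mult, Rabs_pos_eq by nra. unfold dot; nra. Qed.
Lemma comp3_le u : Rabs (x3 u) <= vnorm u.
Proof. apply Rsqr_incr_0_var; [|apply vnorm_ge0]. unfold Rsqr. rewrite vnorm_sq, <- Rabs_mult, Rabs_pos_eq by nra. unfold dot; nra. Qed.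

Lemma vsub_add u v : vsub u v = vadd u (vscale (-1) v).
Proof. apply R3_ext; vunfold; ring. Qed.

Lemma vnorm_sub_triangle u v w : vnorm (vsub u w) <= vnorm (vsub u v) + vnorm (vsub v w).
Proof.
  replace (vsub u w) with (vadd (vsub u v) (vsub v w)) by (apply R3_ext; vunfold; ring).
  apply vnorm_triangle.
Qed.

Lemma vnorm_sub_sym u v : vnorm (vsub u v) = vnorm (vsub v u).
Proof. unfold vnorm; f_equal; vunfold; ring. Qed.

Definition det3 (u v w : R3) := dot u (cross v w).

Lemma parseval (v1 v2 v3 m : R3) :
  dot v1 v1 = 1 -> dot v2 v2 = 1 -> dot v3 v3 = 1 ->
  dot v1 v2 = 0 -> dot v1 v3 = 0 -> dot v2 v3 = 0 ->
  dot m m = dot m v1 * dot m v1 + dot m v2 * dot m v2 + dot m v3 * dot m v3.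
Proof.
  intros H11 H22 H33 H12 H13 H23.
  set (D := det3 v1 v2 v3).
  assert (HD : D * D = 1).
  { assert (E: D * D = dot v1 v1 * dot v2 v2 * dot v3 v3 + 2 * dot v1 v2 * dot v2 v3 * dot v1 v3
       - dot v1 v1 * dot v2 v3 * dot v2 v3 - dot v2 v2 * dot v1 v3 * dot v1 v3
       - dot v3 v3 * dot v1 v2 * dot v1 v2) by (unfold D, det3; vunfold; ring).
    rewrite E, H11, H22, H33, H12, H13, H23; ring. }
  (* Cramer: D m = d1 v1 + d2 v2 + d3 v3 *)
  set (d1 := det3 m v2 v3). set (d2 := det3 v1 m v3). set (d3 := det3 v1 v2 m).
  assert (Cr : vscale D m = vadd (vscale d1 v1) (vadd (vscale d2 v2) (vscale d3 v3))).
  { apply R3_ext; unfold D, d1, d2, d3, det3; vunfold; ring. }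
  assert (E1 : D * dot m v1 = d1).
  { replace (D * dot m v1) with (dot (vscale D m) v1) by (rewrite dot_scalel; ring).
    rewrite Cr, !dot_addl, !dot_scalel. rewrite (dot_comm v2 v1), (dot_comm v3 v1). rewrite H11, H12, H13. ring. }
  assert (E2 : D * dot m v2 = d2).
  { replace (D * dot m v2) with (dot (vscale D m) v2) by (rewrite dot_scalel; ring).
    rewrite Cr, !dot_addl, !dot_scalel. rewrite (dot_comm v3 v2). rewrite H22, H12, H23. ring. }
  assert (E3 : D * dot m v3 = d3).
  { replace (D * dot m v3) with (dot (vscale D m) v3) by (rewrite dot_scalel; ring).
    rewrite Cr, !dot_addl, !dot_scalel. rewrite H33, H13, H23. ring. }
  assert (E : D * D * dot m m = d1 * d1 + d2 * d2 + d3 * d3).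
  { replace (D * D * dot m m) with (dot (vscale D m) (vscale D m)) by (rewrite dot_scalel, dot_scaler; ring).
    rewrite Cr, !dot_addl, !dot_addr, !dot_scalel, !dot_scaler.
    rewrite (dot_comm v2 v1), (dot_comm v3 v1), (dot_comm v3 v2), H11, H22, H33, H12, H13, H23. ring. }
  rewrite HD in E. rewrite <- E1, <- E2, <- E3 in E. nra.
Qed.

Lemma sq3_zero x y z : x*x+y*y+z*z = 0 -> x = 0 /\ y = 0 /\ z = 0.
Proof.
  intros H. pose proof (Rle_0_sqr x). pose proof (Rle_0_sqr y). pose proof (Rle_0_sqr z). unfold Rsqr in *.
  repeat split; apply Rsqr_0_uniq; unfold Rsqr; lra.
Qed.

Lemma sq_nonneg x : 0 <= x * x.
Proof. apply Rle_0_sqr. Qed.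

Lemma binet_cauchy p q r s : dot (cross p q) (cross r s) = dot p r * dot q s - dot p s * dot q r.
Proof. unfold dot, cross; simpl; ring. Qed.
Lemma triple_swap n e x : dot n (cross e x) = - dot x (cross e n).
Proof. unfold dot, cross; simpl; ring. Qed.
Lemma cross_self_scale k n : cross (vscale k n) n = mkR3 0 0 0.
Proof. apply R3_ext; unfold cross, vscale; simpl; ring. Qed.
Lemma dot_zero_r u : dot u (mkR3 0 0 0) = 0.
Proof. unfold dot; simpl; ring. Qed.

Lemma vnorm_rev_triangle u v : vnorm u - vnorm v <= vnorm (vadd u v).
Proof.
  pose proof (vnorm_triangle (vadd u v) (vscale (-1) v)).
  replace (vadd (vadd u v) (vscale (-1) v)) with u in H by (apply R3_ext; unfold vadd, vscale; simpl; ring).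
  rewrite vnorm_scale in H. replace (Rabs (-1)) with 1 in H by (rewrite Rabs_left; lra). lra.
Qed.

Lemma vnorm_unit v : dot v v = 1 -> vnorm v = 1.
Proof. intros H. apply vnorm_eq; lra. Qed.

Lemma abs_dot_unit u v : dot v v = 1 -> Rabs (dot u v) <= vnorm u.
Proof. intros H. apply dot_unit_le, vnorm_unit; auto. Qed.

From Stdlib Require Import Reals Lra Psatz.
Open Scope R_scope.

Lemma dot_zero_eq z : dot z z = 0 -> z = mkR3 0 0 0.
Proof. intros H. unfold dot in H. apply R3_ext; simpl; nra. Qed.

Lemma vnorm_inj u v : vnorm u = vnorm v -> dot u u = dot v v.
Proof. intros H. rewrite <- vnorm_sq, <- vnorm_sq, H. ring. Qed.

Lemma dot_sub_sq u v : dot (vsub u v) (vsub u v) = dot u u - 2 * dot u v + dot v v.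
Proof. unfold dot, vsub; simpl; ring. Qed.

Lemma dot_sub_add_sq A B C : dot (vsub A (vadd B C)) (vsub A (vadd B C)) = dot A A + dot B B + dot C C - 2 * dot A B - 2 * dot A C + 2 * dot B C.
Proof. unfold dot, vsub, vadd; simpl; ring. Qed.

Definition O3 := mkR3 0 0 0.

Lemma iso_lin (T : R3 -> R3) : isometry T -> exists U : R3 -> R3,
  (forall p q, vsub (T p) (T q) = U (vsub p q)) /\
  (forall x y, dot (U x) (U y) = dot x y) /\
  (forall k x, U (vscale k x) = vscale k (U x)) /\
  (forall x y, U (vadd x y) = vadd (U x) (U y)).
Proof.
  intros HT. set (U := fun x => vsub (T x) (T O3)).
  assert (Hd : forall p q, dot (vsub (T p) (T q)) (vsub (T p) (T q)) = dot (vsub p q) (vsub p q)).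
  { intros p q. apply vnorm_inj. apply HT. }
  assert (Hn : forall x, dot (U x) (U x) = dot x x).
  { intros x. unfold U. rewrite Hd. f_equal; apply R3_ext; unfold vsub, O3; simpl; ring. }
  assert (Hdiff : forall x y, vsub (U x) (U y) = vsub (T x) (T y)).
  { intros. unfold U. apply R3_ext; unfold vsub; simpl; ring. }
  assert (Hdot : forall x y, dot (U x) (U y) = dot x y).
  { intros x y. pose proof (Hd x y). rewrite <- Hdiff in H.
    rewrite !dot_sub_sq in H. rewrite !Hn in H. lra. }
  assert (Hadd : forall x y, U (vadd x y) = vadd (U x) (U y)).
  { intros x y. set (z := vsub (U (vadd x y)) (vadd (U x) (U y))).
    assert (dot z z = 0).
    { unfold z. rewrite dot_sub_add_sq. rewrite !Hdot. unfold dot, vadd; simpl; ring. }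
    apply dot_zero_eq in H. unfold z in H. apply R3_ext; unfold vsub, vadd in *;
    injection H; simpl; intros; lra. }
  assert (Hsc : forall k x, U (vscale k x) = vscale k (U x)).
  { intros k x. set (z := vsub (U (vscale k x)) (vscale k (U x))).
    assert (dot z z = 0).
    { unfold z. rewrite dot_sub_sq, !dot_scaler, !dot_scalel, !Hdot. unfold dot, vscale; simpl; ring. }
    apply dot_zero_eq in H. unfold z in H. apply R3_ext; unfold vsub, vscale in *;
    injection H; simpl; intros; lra. }
  exists U. split; [|split; [exact Hdot|split; assumption]].
  intros p q. rewrite <- Hdiff.
  assert (E : p = vadd (vsub p q) q) by (apply R3_ext; unfold vsub, vadd; simpl; ring).
  rewrite E at 1. rewrite Hadd. apply R3_ext; unfold vsub, vadd; simpl; ring.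
Qed.

From Stdlib Require Import Reals Lra Psatz.
Open Scope R_scope.

Definition LB (a b : R) (f : R -> R) := exists K M, 0 <= K /\ 0 <= M /\
  (forall s s', a <= s <= b -> a <= s' <= b -> Rabs (f s - f s') <= K * Rabs (s - s')) /\
  (forall s, a <= s <= b -> Rabs (f s) <= M).

Section LBs.
Variables a b : R.

Lemma LB_ext f g : LB a b f -> (forall s, a <= s <= b -> g s = f s) -> LB a b g.
Proof.
  intros [K [M [HK [HM [H1 H2]]]]] E. exists K, M; repeat split; auto.
  - intros s s' Hs Hs'. rewrite !E by auto. auto.
  - intros s Hs. rewrite E by auto. auto.
Qed.

Lemma LB_const k : LB a b (fun _ => k).
Proof. exists 0, (Rabs k); repeat split; try lra; auto using Rabs_pos.
  intros. replace (k - k) with 0 by ring. rewrite Rabs_R0. pose proof (Rabs_pos (s - s')); nra.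
  intros; lra. Qed.

Lemma LB_plus f g : LB a b f -> LB a b g -> LB a b (fun s => f s + g s).
Proof.
  intros [K [M [HK [HM [H1 H2]]]]] [K' [M' [HK' [HM' [H1' H2']]]]].
  exists (K + K'), (M + M'); repeat split; try lra.
  - intros s s' Hs Hs'. specialize (H1 s s' Hs Hs'). specialize (H1' s s' Hs Hs').
    replace (f s + g s - (f s' + g s')) with ((f s - f s') + (g s - g s')) by ring.
    eapply Rle_trans; [apply Rabs_triang|]. lra.
  - intros s Hs. specialize (H2 s Hs). specialize (H2' s Hs).
    eapply Rle_trans; [apply Rabs_triang|]. lra.
Qed.

Lemma LB_opp f : LB a b f -> LB a b (fun s => - f s).
Proof.
  intros [K [M [HK [HM [H1 H2]]]]]. exists K, M; repeat split; auto.
  - intros s s' Hs Hs'. replace (- f s - - f s') with (- (f s - f s')) by ring. rewrite Rabs_Ropp. auto.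
  - intros s Hs. rewrite Rabs_Ropp. auto.
Qed.

Lemma LB_minus f g : LB a b f -> LB a b g -> LB a b (fun s => f s - g s).
Proof. intros. unfold Rminus. apply LB_plus; auto. apply LB_opp; auto. Qed.

Lemma LB_mult f g : LB a b f -> LB a b g -> LB a b (fun s => f s * g s).
Proof.
  intros [K [M [HK [HM [H1 H2]]]]] [K' [M' [HK' [HM' [H1' H2']]]]].
  exists (K * M' + M * K'), (M * M'); repeat split; try nra.
  - intros s s' Hs Hs'. specialize (H1 s s' Hs Hs'). specialize (H1' s s' Hs Hs').
    pose proof (H2 s Hs). pose proof (H2' s' Hs').
    replace (f s * g s - f s' * g s') with ((f s - f s') * g s' + f s * (g s - g s')) by ring.
    eapply Rle_trans; [apply Rabs_triang|]. rewrite !Rabs_mult.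
    pose proof (Rabs_pos (f s - f s')). pose proof (Rabs_pos (g s - g s')).
    pose proof (Rabs_pos (g s')). pose proof (Rabs_pos (f s)). pose proof (Rabs_pos (s - s')).
    assert (Rabs (f s - f s') * Rabs (g s') <= K * Rabs (s - s') * M') by (apply Rmult_le_compat; auto).
    assert (Rabs (f s) * Rabs (g s - g s') <= M * (K' * Rabs (s - s'))) by (apply Rmult_le_compat; auto).
    nra.
  - intros s Hs. rewrite Rabs_mult. apply Rmult_le_compat; auto using Rabs_pos.
Qed.

Lemma LB_scal k f : LB a b f -> LB a b (fun s => k * f s).
Proof. intros. apply (LB_mult (fun _ => k)); auto using LB_const. Qed.

Lemma lip_of_deriv (f f' : R -> R) L : (forall x, derivable_pt_lim f x (f' x)) ->
  (forall x, Rabs (f' x) <= L) -> forall x y, Rabs (f x - f y) <= L * Rabs (x - y).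
Proof.
  intros Hd Hb x y. destruct (Rtotal_order x y) as [Hxy|[Hxy|Hxy]].
  - destruct (MVT_cor2 f f' x y Hxy (fun c _ => Hd c)) as [c [Hc _]].
    replace (f x - f y) with (- (f y - f x)) by ring. rewrite Rabs_Ropp, Hc, Rabs_mult.
    rewrite (Rabs_minus_sym x y). apply Rmult_le_compat_r; auto using Rabs_pos.
  - subst. replace (f y - f y) with 0 by ring. replace (y - y) with 0 by ring. rewrite Rabs_R0.
    pose proof (Hb y). pose proof (Rabs_pos (f' y)). lra.
  - destruct (MVT_cor2 f f' y x Hxy (fun c _ => Hd c)) as [c [Hc _]].
    rewrite Hc, Rabs_mult. apply Rmult_le_compat_r; auto using Rabs_pos.
Qed.

Lemma lip_on_of_deriv (f f' : R -> R) L : (forall x, a <= x <= b -> derivable_pt_lim f x (f' x)) ->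
  (forall x, a <= x <= b -> Rabs (f' x) <= L) -> forall x y, a <= x <= b -> a <= y <= b -> Rabs (f x - f y) <= L * Rabs (x - y).
Proof.
  intros Hd Hb x y Hx Hy. destruct (Rtotal_order x y) as [Hxy|[Hxy|Hxy]].
  - destruct (MVT_cor2 f f' x y Hxy (fun c Hc => Hd c ltac:(lra))) as [c [Hc Hc']].
    replace (f x - f y) with (- (f y - f x)) by ring. rewrite Rabs_Ropp, Hc, Rabs_mult.
    rewrite (Rabs_minus_sym x y). apply Rmult_le_compat_r; auto using Rabs_pos. apply Hb; lra.
  - subst. replace (f y - f y) with 0 by ring. replace (y - y) with 0 by ring. rewrite Rabs_R0.
    pose proof (Hb y Hy). pose proof (Rabs_pos (f' y)). lra.
  - destruct (MVT_cor2 f f' y x Hxy (fun c Hc => Hd c ltac:(lra))) as [c [Hc Hc']].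
    rewrite Hc, Rabs_mult. apply Rmult_le_compat_r; auto using Rabs_pos. apply Hb; lra.
Qed.

Lemma sin_lip x y : Rabs (sin x - sin y) <= 1 * Rabs (x - y).
Proof. apply (lip_of_deriv sin cos). intros; apply derivable_pt_lim_sin.
  intros. apply Rabs_le. apply COS_bound. Qed.
Lemma cos_lip x y : Rabs (cos x - cos y) <= 1 * Rabs (x - y).
Proof. apply (lip_of_deriv cos (fun x => - sin x)). intros; apply derivable_pt_lim_cos.
  intros. rewrite Rabs_Ropp. apply Rabs_le. apply SIN_bound. Qed.

Lemma LB_sin f : LB a b f -> LB a b (fun s => sin (f s)).
Proof.
  intros [K [M [HK [HM [H1 H2]]]]]. exists K, 1; repeat split; try lra.
  - intros s s' Hs Hs'. eapply Rle_trans; [apply sin_lip|]. specialize (H1 s s' Hs Hs'). lra.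
  - intros. apply Rabs_le, SIN_bound.
Qed.
Lemma LB_cos f : LB a b f -> LB a b (fun s => cos (f s)).
Proof.
  intros [K [M [HK [HM [H1 H2]]]]]. exists K, 1; repeat split; try lra.
  - intros s s' Hs Hs'. eapply Rle_trans; [apply cos_lip|]. specialize (H1 s s' Hs Hs'). lra.
  - intros. apply Rabs_le, COS_bound.
Qed.

Lemma LB_inv f m : 0 < m -> LB a b f -> (forall s, a <= s <= b -> m <= f s) -> LB a b (fun s => / f s).
Proof.
  intros Hm [K [M [HK [HM [H1 H2]]]]] Hl. exists (K / (m * m)), (/ m); repeat split.
  - apply Rmult_le_pos; auto. apply Rlt_le, Rinv_0_lt_compat; nra.
  - apply Rlt_le, Rinv_0_lt_compat; lra.
  - intros s s' Hs Hs'. pose proof (Hl s Hs). pose proof (Hl s' Hs').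
    replace (/ f s - / f s') with ((f s' - f s) / (f s * f s')) by (field; lra).
    unfold Rdiv. rewrite Rabs_mult, Rabs_inv, (Rabs_pos_eq (f s * f s')) by nra.
    rewrite Rabs_minus_sym. specialize (H1 s s' Hs Hs').
    assert (/ (f s * f s') <= / (m * m)) by (apply Rinv_le_contravar; nra).
    pose proof (Rabs_pos (f s - f s')). pose proof (Rabs_pos (s - s')).
    assert (0 < / (f s * f s')) by (apply Rinv_0_lt_compat; nra).
    assert (0 < / (m * m)) by (apply Rinv_0_lt_compat; nra).
    apply Rle_trans with ((K * Rabs (s - s')) * / (m * m)); [apply Rmult_le_compat; lra | right; unfold Rdiv; ring].
  - intros s Hs. pose proof (Hl s Hs). rewrite Rabs_inv, Rabs_pos_eq by lra.
    apply Rinv_le_contravar; lra.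
Qed.

Lemma LB_sqrt f m : 0 < m -> LB a b f -> (forall s, a <= s <= b -> m <= f s) -> LB a b (fun s => sqrt (f s)).
Proof.
  intros Hm [K [M [HK [HM [H1 H2]]]]] Hl. exists (K / (2 * sqrt m)), (sqrt M); repeat split.
  - apply Rmult_le_pos; auto. apply Rlt_le, Rinv_0_lt_compat. pose proof (sqrt_lt_R0 m Hm); lra.
  - apply sqrt_pos.
  - intros s s' Hs Hs'. pose proof (Hl s Hs). pose proof (Hl s' Hs').
    pose proof (sqrt_lt_R0 m Hm). pose proof (sqrt_le_1 m (f s) ltac:(lra) ltac:(lra) H).
    pose proof (sqrt_le_1 m (f s') ltac:(lra) ltac:(lra) H0).
    replace (sqrt (f s) - sqrt (f s')) with ((f s - f s') / (sqrt (f s) + sqrt (f s'))).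
    2:{ assert (E: (sqrt (f s) - sqrt (f s')) * (sqrt (f s) + sqrt (f s')) = f s - f s').
        { replace ((sqrt (f s) - sqrt (f s')) * (sqrt (f s) + sqrt (f s'))) with
            (sqrt (f s) * sqrt (f s) - sqrt (f s') * sqrt (f s')) by ring.
          rewrite !sqrt_sqrt by lra. ring. }
        rewrite <- E. field. lra. }
    unfold Rdiv. rewrite Rabs_mult, Rabs_inv, (Rabs_pos_eq (sqrt (f s) + sqrt (f s'))) by lra.
    specialize (H1 s s' Hs Hs').
    assert (/ (sqrt (f s) + sqrt (f s')) <= / (2 * sqrt m)) by (apply Rinv_le_contravar; lra).
    pose proof (Rabs_pos (f s - f s')). pose proof (Rabs_pos (s - s')).
    assert (0 < / (sqrt (f s) + sqrt (f s'))) by (apply Rinv_0_lt_compat; lra).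
    apply Rle_trans with ((K * Rabs (s - s')) * / (2 * sqrt m)); [apply Rmult_le_compat; lra | right; unfold Rdiv; ring].
  - intros s Hs. rewrite Rabs_pos_eq by apply sqrt_pos. apply sqrt_le_1_alt.
    specialize (H2 s Hs). pose proof (Hl s Hs). rewrite Rabs_pos_eq in H2 by lra. auto.
Qed.

Definition clamp (s : R) := Rmax a (Rmin b s).

Lemma clamp_in s : a <= b -> a <= clamp s <= b.
Proof. intros. unfold clamp, Rmax, Rmin. repeat destruct Rle_dec; lra. Qed.
Lemma clamp_id s : a <= s <= b -> clamp s = s.
Proof. intros. unfold clamp, Rmax, Rmin. repeat destruct Rle_dec; lra. Qed.
Lemma clamp_lip s s' : Rabs (clamp s - clamp s') <= Rabs (s - s').
Proof. unfold clamp, Rmax, Rmin. repeat destruct Rle_dec; unfold Rabs; repeat destruct Rcase_abs; lra. Qed.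

Lemma lip_continuity (g : R -> R) K : 0 <= K -> (forall s s', Rabs (g s - g s') <= K * Rabs (s - s')) ->
  forall x, continuity_pt g x.
Proof.
  intros HK Hg x. unfold continuity_pt, continue_in, limit1_in, limit_in. intros eps Heps.
  exists (eps / (K + 1)). split. apply Rdiv_lt_0_compat; lra.
  intros y [_ Hy]. simpl in *. unfold R_dist in *. eapply Rle_lt_trans; [apply Hg|].
  apply Rle_lt_trans with (K * (eps / (K + 1))). apply Rmult_le_compat_l; lra.
  apply Rmult_lt_reg_r with (K + 1); [lra|]. field_simplify; lra.
Qed.

Lemma LB_clamp_cont f : a <= b -> LB a b f -> forall x, continuity_pt (fun s => f (clamp s)) x.
Proof.
  intros Hab [K [M [HK [HM [H1 H2]]]]]. apply (lip_continuity _ K HK).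
  intros s s'. eapply Rle_trans; [apply H1; apply clamp_in; auto|].
  apply Rmult_le_compat_l; auto. apply clamp_lip.
Qed.

Lemma LB_lower f : a <= b -> LB a b f -> (forall s, a <= s <= b -> 0 < f s) ->
  exists m, 0 < m /\ forall s, a <= s <= b -> m <= f s.
Proof.
  intros Hab Hf Hp. destruct (continuity_ab_min (fun s => f (clamp s)) a b Hab (fun c _ => LB_clamp_cont f Hab Hf c)) as [x [Hx Hxi]].
  exists (f (clamp x)). split. apply Hp, clamp_in; auto.
  intros s Hs. specialize (Hx s Hs). simpl in Hx. rewrite (clamp_id s), (clamp_id x) in Hx by auto. rewrite (clamp_id x) by auto. auto.
Qed.

Lemma LB_upper_abs f : LB a b f -> exists M, 0 <= M /\ forall s, a <= s <= b -> Rabs (f s) <= M.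
Proof. intros [K [M [HK [HM [H1 H2]]]]]. eauto. Qed.
Lemma LB_lip f : LB a b f -> exists K, 0 <= K /\ forall s s', a <= s <= b -> a <= s' <= b -> Rabs (f s - f s') <= K * Rabs (s - s').
Proof. intros [K [M [HK [HM [H1 H2]]]]]. eauto. Qed.

Lemma deriv_cont f x l : derivable_pt_lim f x l -> continuity_pt f x.
Proof. intros H. apply (derivable_continuous_pt f x (exist _ l H)). Qed.

Lemma LB_of_C1 f f' : a <= b -> (forall x, derivable_pt_lim f x (f' x)) -> (forall x, continuity_pt f' x) -> LB a b f.
Proof.
  intros Hab Hd Hc.
  destruct (continuity_ab_maj (fun x => Rabs (f' x)) a b Hab) as [x1' [Hx1 _]].
  { intros c _. apply (continuity_pt_comp f' Rabs); auto. apply Rcontinuity_abs. }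
  destruct (continuity_ab_maj (fun x => Rabs (f x)) a b Hab) as [x2' [Hx2 _]].
  { intros c _. apply (continuity_pt_comp f Rabs); auto. apply (deriv_cont f c (f' c)); auto. apply Rcontinuity_abs. }
  exists (Rabs (f' x1')), (Rabs (f x2')); repeat split; auto using Rabs_pos.
  intros s s' Hs Hs'. apply (lip_on_of_deriv f f'); auto.
Qed.

Lemma LB_tower f D : a <= b -> (forall t, D O t = f t) -> (forall n t, derivable_pt_lim (D n) t (D (S n) t)) ->
  forall n, LB a b (D n).
Proof.
  intros Hab H0 Hd n. apply (LB_of_C1 (D n) (D (S n))); auto.
  intros x. apply (deriv_cont _ _ _ (Hd (S n) x)).
Qed.

End LBs.

From Stdlib Require Import Reals Lra Psatz.
Open Scope R_scope.

Definition LBv (a b : R) (X : R -> R3) :=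
  LB a b (fun s => x1 (X s)) /\ LB a b (fun s => x2 (X s)) /\ LB a b (fun s => x3 (X s)).

Section LBv.
Variables a b : R.

Lemma LBv_ext X Y : LBv a b X -> (forall s, a <= s <= b -> Y s = X s) -> LBv a b Y.
Proof. intros [H1 [H2 H3]] E. split; [|split]; [apply (LB_ext a b (fun s => x1 (X s)))|apply (LB_ext a b (fun s => x2 (X s)))|apply (LB_ext a b (fun s => x3 (X s)))]; auto; intros s Hs; rewrite (E s Hs); auto. Qed.

Lemma LBv_lip X : LBv a b X -> exists K, 0 <= K /\ forall s s', a <= s <= b -> a <= s' <= b ->
  vnorm (vsub (X s) (X s')) <= K * Rabs (s - s').
Proof.
  intros [H1 [H2 H3]]. destruct (LB_lip _ _ _ H1) as [K1 [HK1 L1]].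
  destruct (LB_lip _ _ _ H2) as [K2 [HK2 L2]]. destruct (LB_lip _ _ _ H3) as [K3 [HK3 L3]].
  exists (K1 + K2 + K3). split; [lra|]. intros s s' Hs Hs'.
  eapply Rle_trans; [apply vnorm_comp_bound|]. unfold vsub; simpl.
  specialize (L1 s s' Hs Hs'). specialize (L2 s s' Hs Hs'). specialize (L3 s s' Hs Hs'). lra.
Qed.

Lemma LBv_bound X : LBv a b X -> exists M, 0 <= M /\ forall s, a <= s <= b -> vnorm (X s) <= M.
Proof.
  intros [H1 [H2 H3]]. destruct (LB_upper_abs _ _ _ H1) as [K1 [HK1 L1]].
  destruct (LB_upper_abs _ _ _ H2) as [K2 [HK2 L2]]. destruct (LB_upper_abs _ _ _ H3) as [K3 [HK3 L3]].
  exists (K1 + K2 + K3). split; [lra|]. intros s Hs.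
  eapply Rle_trans; [apply vnorm_comp_bound|].
  specialize (L1 s Hs). specialize (L2 s Hs). specialize (L3 s Hs). lra.
Qed.

Lemma LBv_dot X Y : LBv a b X -> LBv a b Y -> LB a b (fun s => dot (X s) (Y s)).
Proof. intros [H1 [H2 H3]] [G1 [G2 G3]]. unfold dot. repeat apply LB_plus; apply LB_mult; auto. Qed.

Lemma LBv_cross X Y : LBv a b X -> LBv a b Y -> LBv a b (fun s => cross (X s) (Y s)).
Proof. intros [H1 [H2 H3]] [G1 [G2 G3]]. unfold cross; simpl. repeat split; apply LB_minus; apply LB_mult; auto. Qed.

Lemma LBv_vadd X Y : LBv a b X -> LBv a b Y -> LBv a b (fun s => vadd (X s) (Y s)).
Proof. intros [H1 [H2 H3]] [G1 [G2 G3]]. unfold vadd; simpl. repeat split; apply LB_plus; auto. Qed.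

Lemma LBv_vsub X Y : LBv a b X -> LBv a b Y -> LBv a b (fun s => vsub (X s) (Y s)).
Proof. intros [H1 [H2 H3]] [G1 [G2 G3]]. unfold vsub; simpl. repeat split; apply LB_minus; auto. Qed.

Lemma LBv_vscale k X : LB a b k -> LBv a b X -> LBv a b (fun s => vscale (k s) (X s)).
Proof. intros Hk [H1 [H2 H3]]. unfold vscale; simpl. repeat split; apply LB_mult; auto. Qed.

End LBv.

From Stdlib Require Import Reals Lra Psatz FunctionalExtensionality.
From Coquelicot Require Import Coquelicot.
Open Scope R_scope.

Lemma deriv_ext f g t l : (forall x, f x = g x) -> derivable_pt_lim f t l -> derivable_pt_lim g t l.
Proof. intros E H. replace g with f; auto. apply functional_extensionality; auto. Qed.

Lemma deriv_const_on a b f t l : a < b -> a <= t <= b -> (forall s, a <= s <= b -> f s = f t) ->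
  derivable_pt_lim f t l -> l = 0.
Proof.
  intros Hab Ht Hc Hd. apply Rabs_eq_0. apply Rle_antisym; [|apply Rabs_pos].
  apply Rnot_lt_le. intros Hl. destruct (Hd (Rabs l) Hl) as [[d Hdp] Hdd]. simpl in Hdd.
  set (h := Rmin (d / 2) ((b - a) / 2)).
  assert (0 < h) by (unfold h; apply Rmin_glb_lt; lra).
  assert (h <= d / 2) by apply Rmin_l. assert (h <= (b - a) / 2) by apply Rmin_r.
  destruct (Rle_lt_dec t ((a + b) / 2)) as [Hm|Hm].
  - specialize (Hdd h ltac:(lra) ltac:(rewrite Rabs_pos_eq; lra)).
    rewrite (Hc (t + h)) in Hdd by lra. replace ((f t - f t) / h - l) with (- l) in Hdd by (field; lra).
    rewrite Rabs_Ropp in Hdd; lra.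
  - specialize (Hdd (- h) ltac:(lra) ltac:(rewrite Rabs_Ropp, Rabs_pos_eq; lra)).
    rewrite (Hc (t + - h)) in Hdd by lra. replace ((f t - f t) / - h - l) with (- l) in Hdd by (field; lra).
    rewrite Rabs_Ropp in Hdd; lra.
Qed.


Lemma dmul f g t a b : derivable_pt_lim f t a -> derivable_pt_lim g t b ->
  derivable_pt_lim (fun s => f s * g s) t (a * g t + f t * b).
Proof. intros. apply (derivable_pt_lim_mult f g); auto. Qed.
Lemma dplus f g t a b : derivable_pt_lim f t a -> derivable_pt_lim g t b ->
  derivable_pt_lim (fun s => f s + g s) t (a + b).
Proof. intros. apply (derivable_pt_lim_plus f g); auto. Qed.
Lemma dminus f g t a b : derivable_pt_lim f t a -> derivable_pt_lim g t b ->
  derivable_pt_lim (fun s => f s - g s) t (a - b).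
Proof. intros. apply (derivable_pt_lim_minus f g); auto. Qed.
Lemma dconst k t : derivable_pt_lim (fun _ => k) t 0.
Proof. apply derivable_pt_lim_const. Qed.
Lemma dlim_eq f t l l' : derivable_pt_lim f t l -> l = l' -> derivable_pt_lim f t l'.
Proof. intros; subst; auto. Qed.

Lemma deriv_dot U U' V V' t : deriv3 U U' t -> deriv3 V V' t ->
  derivable_pt_lim (fun s => dot (U s) (V s)) t (dot (U' t) (V t) + dot (U t) (V' t)).
Proof.
  intros [H1 [H2 H3]] [G1 [G2 G3]]. unfold dot.
  eapply dlim_eq; [apply dplus; [apply dplus|]; apply dmul; eauto|]. simpl; ring.
Qed.

Lemma deriv_cross U U' V V' t : deriv3 U U' t -> deriv3 V V' t ->
  deriv3 (fun s => cross (U s) (V s)) (fun s => vadd (cross (U' s) (V s)) (cross (U s) (V' s))) t.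
Proof.
  intros [H1 [H2 H3]] [G1 [G2 G3]]. unfold cross, vadd; simpl.
  split; [|split]; (eapply dlim_eq; [apply dminus; apply dmul; eauto|]); simpl; ring.
Qed.

Lemma deriv_scale k k' U U' t : derivable_pt_lim k t k' -> deriv3 U U' t ->
  deriv3 (fun s => vscale (k s) (U s)) (fun s => vadd (vscale k' (U s)) (vscale (k s) (U' s))) t.
Proof.
  intros Hk [H1 [H2 H3]]. unfold vscale, vadd; simpl.
  split; [|split]; (eapply dlim_eq; [apply dmul; eauto|]); simpl; ring.
Qed.

Lemma deriv_dot_const m U U' t : deriv3 U U' t -> derivable_pt_lim (fun s => dot m (U s)) t (dot m (U' t)).
Proof.
  intros [H1 [H2 H3]]. unfold dot.
  eapply dlim_eq; [apply dplus; [apply dplus|]; apply dmul; eauto using dconst|]. simpl; ring.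
Qed.

Lemma deriv_vadd U U' V V' t : deriv3 U U' t -> deriv3 V V' t ->
  deriv3 (fun s => vadd (U s) (V s)) (fun s => vadd (U' s) (V' s)) t.
Proof.
  intros [H1 [H2 H3]] [G1 [G2 G3]]. unfold vadd; simpl.
  split; [|split]; apply derivable_pt_lim_plus; auto.
Qed.



Lemma deriv3_ext U V W t : (forall s, U s = V s) -> deriv3 U W t -> deriv3 V W t.
Proof. intros E [H1 [H2 H3]]. split; [|split]; eapply deriv_ext; eauto; intros; simpl; rewrite E; auto. Qed.

Lemma tower3 a b f f' f'' : a <= b -> smooth f -> (forall t, derivable_pt_lim f t (f' t)) ->
  (forall t, derivable_pt_lim f' t (f'' t)) ->
  exists E, (forall t, derivable_pt_lim f'' t (E t)) /\ LB a b f /\ LB a b f' /\ LB a b f'' /\ LB a b E.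
Proof.
  intros Hab [D [H0 Hd]] H1 H2.
  assert (E0 : D O = f) by (apply functional_extensionality; auto).
  assert (E1 : forall t, f' t = D 1%nat t).
  { intros t. apply (uniqueness_limite f t); auto. rewrite <- E0; apply Hd. }
  assert (E1' : f' = D 1%nat) by (apply functional_extensionality; auto).
  assert (E2 : forall t, f'' t = D 2%nat t).
  { intros t. apply (uniqueness_limite f' t); auto. rewrite E1'; apply Hd. }
  assert (E2' : f'' = D 2%nat) by (apply functional_extensionality; auto).
  exists (D 3%nat). rewrite E2'. split; [apply Hd|].
  pose proof (LB_tower a b f D Hab H0 Hd) as HL.
  rewrite <- E0, E1'. repeat split; apply HL.
Qed.

Lemma tower2 a b f f' : a <= b -> smooth f -> (forall t, derivable_pt_lim f t (f' t)) ->
  LB a b f /\ LB a b f'.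
Proof.
  intros Hab [D [H0 Hd]] H1.
  assert (E0 : D O = f) by (apply functional_extensionality; auto).
  assert (E1 : forall t, f' t = D 1%nat t).
  { intros t. apply (uniqueness_limite f t); auto. rewrite <- E0; apply Hd. }
  assert (E1' : f' = D 1%nat) by (apply functional_extensionality; auto).
  pose proof (LB_tower a b f D Hab H0 Hd) as HL. rewrite <- E0, E1'. split; apply HL.
Qed.

From Stdlib Require Import Reals Lra Psatz Lia ZArith FunctionalExtensionality IndefiniteDescription.
From Coquelicot Require Import Coquelicot.
Open Scope R_scope.

Lemma taylor1 a b f f' K : (forall x, a <= x <= b -> derivable_pt_lim f x (f' x)) ->
  (forall s s', a <= s <= b -> a <= s' <= b -> Rabs (f' s - f' s') <= K * Rabs (s - s')) -> 0 <= K ->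
  forall s s', a <= s <= b -> a <= s' <= b -> Rabs (f s - f s' - (s - s') * f' s') <= K * ((s - s') * (s - s')).
Proof.
  intros Hd HL HK s s' Hs Hs'.
  set (g := fun x => f x - x * f' s').
  assert (Hg : forall x, a <= x <= b -> derivable_pt_lim g x (f' x - f' s')).
  { intros x Hx. unfold g. eapply dlim_eq; [apply dminus; [apply Hd; auto| apply dmul; [apply derivable_pt_lim_id| apply dconst]]|]. simpl; ring. }
  assert (Hmm : a <= Rmin s s' /\ Rmax s s' <= b) by (split; [apply Rmin_glb|apply Rmax_lub]; lra).
  assert (Hb : forall x, Rmin s s' <= x <= Rmax s s' -> Rabs (f' x - f' s') <= K * Rabs (s - s')).
  { intros x Hx. assert (Hx' : (s <= x <= s' \/ s' <= x <= s)) by (unfold Rmin, Rmax in Hx; destruct (Rle_dec s s'); lra).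
    eapply Rle_trans. apply HL; auto. split; lra.
    apply Rmult_le_compat_l; auto. unfold Rabs; repeat destruct Rcase_abs; lra. }
  pose proof (lip_on_of_deriv (Rmin s s') (Rmax s s') g (fun x => f' x - f' s') (K * Rabs (s - s'))
    (fun x Hx => Hg x ltac:(lra)) Hb s s') as HH.
  replace (f s - f s' - (s - s') * f' s') with (g s - g s') by (unfold g; ring).
  replace (K * ((s - s') * (s - s'))) with (K * Rabs (s - s') * Rabs (s - s')).
  2:{ rewrite Rmult_assoc, <- Rabs_mult. rewrite (Rabs_pos_eq ((s-s')*(s-s'))) by (apply Rle_0_sqr). reflexivity. }
  apply HH; split; try apply Rmin_l; try apply Rmin_r; try apply Rmax_l; try apply Rmax_r.
Qed.

Definition uvec (ce cdd : R -> R3) (al : R -> R) t :=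
  vadd (vscale (cos (al t)) (normal cdd t)) (vscale (sin (al t)) (binormal ce cdd t)).
Definition mvec (ce cdd : R -> R3) (al : R -> R) t :=
  vsub (vscale (cos (al t)) (binormal ce cdd t)) (vscale (sin (al t)) (normal cdd t)).

Lemma ruling_eq ce cdd al be t : ruling ce cdd al be t = vadd (vscale (cos (be t)) (ce t)) (vscale (sin (be t)) (uvec ce cdd al t)).
Proof. reflexivity. Qed.

Lemma frac_le1 K : 0 <= K -> K / (K + 1) <= 1.
Proof. intros. apply Rmult_le_reg_r with (K + 1); [lra|]. unfold Rdiv. rewrite Rmult_assoc, Rinv_l by lra. lra. Qed.

Section Curve.
Variables (a b : R) (c ce cdd nd : R -> R3).
Hypothesis Hab : a < b.
Hypothesis Hc_smooth : smooth3 c.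
Hypothesis Hce : forall t, deriv3 c ce t.
Hypothesis Hcdd : forall t, deriv3 ce cdd t.
Hypothesis Harc : forall t, a <= t <= b -> vnorm (ce t) = 1.
Hypothesis Hemb : forall s t, a <= s <= b -> a <= t <= b -> c s = c t -> s = t.
Hypothesis Hkappa : forall t, a <= t <= b -> 0 < curvature cdd t.
Hypothesis Hnd : forall t, a <= t <= b -> deriv3 (normal cdd) nd t.

Let Hab' : a <= b. Proof. lra. Qed.

Lemma comps : exists E : R -> R3,
  (forall t, deriv3 cdd E t) /\
  LB a b (fun s => x1 (c s)) /\ LB a b (fun s => x2 (c s)) /\ LB a b (fun s => x3 (c s)) /\
  LB a b (fun s => x1 (ce s)) /\ LB a b (fun s => x2 (ce s)) /\ LB a b (fun s => x3 (ce s)) /\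
  LB a b (fun s => x1 (cdd s)) /\ LB a b (fun s => x2 (cdd s)) /\ LB a b (fun s => x3 (cdd s)) /\
  LB a b (fun s => x1 (E s)) /\ LB a b (fun s => x2 (E s)) /\ LB a b (fun s => x3 (E s)).
Proof.
  destruct Hc_smooth as [S1 [S2 S3]].
  destruct (tower3 a b _ (fun s => x1 (ce s)) (fun s => x1 (cdd s)) Hab' S1 (fun t => proj1 (Hce t)) (fun t => proj1 (Hcdd t)))
    as [E1 [D1 [L1 [L1' [L1'' L1''']]]]].
  destruct (tower3 a b _ (fun s => x2 (ce s)) (fun s => x2 (cdd s)) Hab' S2 (fun t => proj1 (proj2 (Hce t))) (fun t => proj1 (proj2 (Hcdd t))))
    as [E2 [D2 [L2 [L2' [L2'' L2''']]]]].
  destruct (tower3 a b _ (fun s => x3 (ce s)) (fun s => x3 (cdd s)) Hab' S3 (fun t => proj2 (proj2 (Hce t))) (fun t => proj2 (proj2 (Hcdd t))))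
    as [E3 [D3 [L3 [L3' [L3'' L3''']]]]].
  exists (fun s => mkR3 (E1 s) (E2 s) (E3 s)). repeat split; simpl; auto.
Qed.

Lemma kappa_def t : curvature cdd t = sqrt (dot (cdd t) (cdd t)).
Proof. reflexivity. Qed.


Lemma kappa_pos_sq t : a <= t <= b -> curvature cdd t * curvature cdd t = dot (cdd t) (cdd t).
Proof. intros. apply vnorm_sq. Qed.

Lemma cdd_eq t : a <= t <= b -> cdd t = vscale (curvature cdd t) (normal cdd t).
Proof.
  intros Ht. pose proof (Hkappa t Ht). unfold normal. apply R3_ext; unfold vscale; simpl; field; lra.
Qed.

Lemma frame_ee t : a <= t <= b -> dot (ce t) (ce t) = 1.
Proof. intros Ht. rewrite <- vnorm_sq, Harc; auto; ring. Qed.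

Lemma frame_ec t : a <= t <= b -> dot (ce t) (cdd t) = 0.
Proof.
  intros Ht. pose proof (deriv_dot ce cdd ce cdd t (Hcdd t) (Hcdd t)) as H.
  apply (deriv_const_on a b _ t _ Hab Ht) in H.
  - rewrite (dot_comm (cdd t)) in H. lra.
  - intros s Hs. simpl. rewrite frame_ee, frame_ee; auto.
Qed.

Lemma frame_nn t : a <= t <= b -> dot (normal cdd t) (normal cdd t) = 1.
Proof.
  intros Ht. pose proof (Hkappa t Ht). pose proof (kappa_pos_sq t Ht).
  unfold normal. rewrite dot_scalel, dot_scaler. rewrite <- H0. field. lra.
Qed.

Lemma frame_en t : a <= t <= b -> dot (ce t) (normal cdd t) = 0.
Proof. intros Ht. unfold normal. rewrite dot_scaler, frame_ec; auto; ring. Qed.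

Lemma frame_bb t : a <= t <= b -> dot (binormal ce cdd t) (binormal ce cdd t) = 1.
Proof. intros Ht. unfold binormal. rewrite lagrange, frame_ee, frame_nn, frame_en; auto; ring. Qed.
Lemma frame_eb t : dot (ce t) (binormal ce cdd t) = 0.
Proof. unfold binormal, dot, cross; simpl; ring. Qed.
Lemma frame_nb t : dot (normal cdd t) (binormal ce cdd t) = 0.
Proof. unfold binormal, dot, cross; simpl; ring. Qed.

Lemma frame_n_nd t : a <= t <= b -> dot (normal cdd t) (nd t) = 0.
Proof.
  intros Ht. pose proof (deriv_dot _ _ _ _ t (Hnd t Ht) (Hnd t Ht)) as H.
  apply (deriv_const_on a b _ t _ Hab Ht) in H.
  - rewrite (dot_comm (nd t)) in H. lra.
  - intros s Hs. simpl. rewrite frame_nn, frame_nn; auto.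
Qed.

Lemma frame_e_nd t : a <= t <= b -> dot (ce t) (nd t) = - curvature cdd t.
Proof.
  intros Ht. pose proof (deriv_dot _ _ _ _ t (Hcdd t) (Hnd t Ht)) as H.
  apply (deriv_const_on a b _ t _ Hab Ht) in H.
  - rewrite (cdd_eq t Ht), dot_scalel, frame_nn in H; auto. lra.
  - intros s Hs. simpl. rewrite frame_en, frame_en; auto.
Qed.

Lemma frame_e_unit t : a <= t <= b -> vnorm (ce t) = 1.
Proof. auto. Qed.

Definition ndf (E : R -> R3) t : R3 :=
  vsub (vscale (/ curvature cdd t) (E t))
       (vscale (dot (cdd t) (E t) / (curvature cdd t * curvature cdd t * curvature cdd t)) (cdd t)).

Lemma nd_formula E : (forall t, deriv3 cdd E t) -> forall t, a <= t <= b -> nd t = ndf E t.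
Proof.
  intros HE t Ht. pose proof (Hkappa t Ht) as Hk. unfold curvature, vnorm in Hk.
  destruct (HE t) as [G1 [G2 G3]]. destruct (Hnd t Ht) as [N1 [N2 N3]].
  set (f1 := fun s => x1 (cdd s)) in *. set (f2 := fun s => x2 (cdd s)) in *. set (f3 := fun s => x3 (cdd s)) in *.
  assert (HS : 0 < f1 t * f1 t + f2 t * f2 t + f3 t * f3 t).
  { apply Rnot_le_lt. intros Hle. assert (dot (cdd t) (cdd t) <= 0) by (unfold dot; unfold f1, f2, f3 in Hle; lra).
    assert (dot (cdd t) (cdd t) = 0) by (pose proof (dot_ge0 (cdd t)); lra). rewrite H0, sqrt_0 in Hk. lra. }
  apply is_derive_Reals in G1, G2, G3.
  assert (Hder : forall (g : R -> R) g', is_derive g t g' -> is_derive (fun s => / sqrt (f1 s * f1 s + f2 s * f2 s + f3 s * f3 s) * g s) t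
    (g' / sqrt (f1 t * f1 t + f2 t * f2 t + f3 t * f3 t) - g t * (f1 t * x1 (E t) + f2 t * x2 (E t) + f3 t * x3 (E t)) /
      (sqrt (f1 t * f1 t + f2 t * f2 t + f3 t * f3 t) * sqrt (f1 t * f1 t + f2 t * f2 t + f3 t * f3 t) * sqrt (f1 t * f1 t + f2 t * f2 t + f3 t * f3 t)))).
  { intros g g' Hg. auto_derive.
    - repeat split; try (eexists; eassumption); try lra. apply Rgt_not_eq, sqrt_lt_R0; auto.
    - replace (Derive (fun x : R => f1 x) t) with (x1 (E t)) by (symmetry; apply is_derive_unique; exact G1).
      replace (Derive (fun x : R => f2 x) t) with (x2 (E t)) by (symmetry; apply is_derive_unique; exact G2).
      replace (Derive (fun x : R => f3 x) t) with (x3 (E t)) by (symmetry; apply is_derive_unique; exact G3).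
      replace (Derive (fun x : R => g x) t) with g' by (symmetry; apply is_derive_unique; exact Hg).
      assert (0 < sqrt (f1 t * f1 t + f2 t * f2 t + f3 t * f3 t)) by (apply sqrt_lt_R0; auto).
      field. lra. }
  pose proof (Hder f1 _ G1) as D1. pose proof (Hder f2 _ G2) as D2. pose proof (Hder f3 _ G3) as D3.
  apply is_derive_Reals in D1, D2, D3.
  pose proof (uniqueness_limite _ t _ _ N1 D1) as U1.
  pose proof (uniqueness_limite _ t _ _ N2 D2) as U2.
  pose proof (uniqueness_limite _ t _ _ N3 D3) as U3.
  assert (0 < sqrt (f1 t * f1 t + f2 t * f2 t + f3 t * f3 t)) by (apply sqrt_lt_R0; auto).
  apply R3_ext; unfold ndf, vsub, vscale, curvature, vnorm, dot; simpl; [rewrite U1|rewrite U2|rewrite U3];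
  unfold f1, f2, f3 in *; field; lra.
Qed.


Lemma frame_LB : exists km, 0 < km /\ (forall t, a <= t <= b -> km <= curvature cdd t) /\
  LB a b (curvature cdd) /\ LBv a b c /\ LBv a b ce /\ LBv a b cdd /\ LBv a b (normal cdd) /\
  LBv a b (binormal ce cdd) /\ LBv a b nd /\ LB a b (torsion ce cdd nd).
Proof.
  destruct comps as [E [HE [C1 [C2 [C3 [E1 [E2 [E3 [D1 [D2 [D3 [F1 [F2 F3]]]]]]]]]]]]].
  assert (Lc : LBv a b c) by (repeat split; auto).
  assert (Le : LBv a b ce) by (repeat split; auto).
  assert (Ld : LBv a b cdd) by (repeat split; auto).
  assert (LE : LBv a b E) by (repeat split; auto).
  assert (Ldd : LB a b (fun s => dot (cdd s) (cdd s))) by (apply LBv_dot; auto).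
  destruct (LB_lower a b _ Hab' Ldd) as [m [Hm Hml]].
  { intros s Hs. rewrite <- kappa_pos_sq by auto. pose proof (Hkappa s Hs). nra. }
  assert (Lk : LB a b (curvature cdd)) by (apply (LB_sqrt a b _ m Hm Ldd Hml)).
  destruct (LB_lower a b _ Hab' Lk) as [km [Hkm Hkml]]; [intros; apply Hkappa; auto|].
  assert (Lik : LB a b (fun s => / curvature cdd s)) by (apply (LB_inv a b _ km); auto).
  pose proof (LBv_vscale a b _ _ Lik Ld) as Ln. change (LBv a b (normal cdd)) in Ln.
  pose proof (LBv_cross a b _ _ Le Ln) as Lb. change (LBv a b (binormal ce cdd)) in Lb.
  assert (Lk3 : LB a b (fun s => / (curvature cdd s * curvature cdd s * curvature cdd s))).
  { apply (LB_inv a b _ (km * km * km)). repeat apply Rmult_lt_0_compat; auto. repeat apply LB_mult; auto.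
    intros s Hs. pose proof (Hkml s Hs). assert (0 <= km * km) by (apply Rmult_le_pos; lra).
    apply Rmult_le_compat; try lra. apply Rmult_le_compat; lra. }
  assert (Lnd : LBv a b nd).
  { apply (LBv_ext a b (ndf E)); [|intros; apply nd_formula; auto].
    unfold ndf. apply LBv_vsub; apply LBv_vscale; auto. unfold Rdiv. apply LB_mult; auto. apply LBv_dot; auto. }
  exists km. refine (conj Hkm (conj Hkml (conj Lk (conj Lc (conj Le (conj Ld (conj Ln (conj Lb (conj Lnd _))))))))).
  unfold torsion. apply (LBv_dot a b nd (binormal ce cdd)); auto.
Qed.

Lemma taylor_c : exists K, 0 <= K /\ forall s s', a <= s <= b -> a <= s' <= b ->
  vnorm (vsub (vsub (c s) (c s')) (vscale (s - s') (ce s'))) <= K * ((s - s') * (s - s')).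
Proof.
  destruct frame_LB as [km [_ [_ [_ [_ [Le _]]]]]].
  destruct Le as [L1 [L2 L3]].
  destruct (LB_lip _ _ _ L1) as [K1 [HK1 M1]]. destruct (LB_lip _ _ _ L2) as [K2 [HK2 M2]].
  destruct (LB_lip _ _ _ L3) as [K3 [HK3 M3]].
  exists (K1 + K2 + K3). split; [lra|]. intros s s' Hs Hs'.
  eapply Rle_trans; [apply vnorm_comp_bound|]. unfold vsub, vscale; simpl.
  pose proof (taylor1 a b (fun x => x1 (c x)) (fun x => x1 (ce x)) K1 (fun x _ => proj1 (Hce x)) M1 HK1 s s' Hs Hs').
  pose proof (taylor1 a b (fun x => x2 (c x)) (fun x => x2 (ce x)) K2 (fun x _ => proj1 (proj2 (Hce x))) M2 HK2 s s' Hs Hs').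
  pose proof (taylor1 a b (fun x => x3 (c x)) (fun x => x3 (ce x)) K3 (fun x _ => proj2 (proj2 (Hce x))) M3 HK3 s s' Hs Hs').
  simpl in *. lra.
Qed.


Lemma c_lip : exists Kc, 0 <= Kc /\ forall s s', a <= s <= b -> a <= s' <= b ->
  vnorm (vsub (c s) (c s')) <= Kc * Rabs (s - s').
Proof. destruct frame_LB as [km [_ [_ [_ [Lc _]]]]]. apply LBv_lip; auto. Qed.


Lemma separation eta : 0 < eta -> exists m, 0 < m /\ forall x y, a <= x <= b -> a <= y <= b ->
  eta <= Rabs (x - y) -> m <= vnorm (vsub (c x) (c y)).
Proof.
  intros Heta. destruct c_lip as [Kc [HKc HL]].
  set (psi := fun x y => vnorm (vsub (c x) (c y)) + Rmax 0 (eta - Rabs (x - y))).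
  assert (Hcont : forall x y, continuity_pt (fun y => psi x y) y).
  { intros x y. unfold psi. apply continuity_pt_plus.
    - unfold vnorm. apply (continuity_pt_comp (fun y => dot (vsub (c x) (c y)) (vsub (c x) (c y))) sqrt).
      + unfold dot, vsub; simpl. destruct (Hce y) as [H1 [H2 H3]].
        pose proof (deriv_cont _ _ _ H1). pose proof (deriv_cont _ _ _ H2). pose proof (deriv_cont _ _ _ H3).
        repeat apply continuity_pt_plus; apply continuity_pt_mult; apply continuity_pt_minus; auto; apply continuity_pt_const; intros ??; auto.
      + apply continuity_pt_sqrt. apply dot_ge0.
    - apply (continuity_pt_comp (fun y => eta - Rabs (x - y)) (Rmax 0)).
      + apply continuity_pt_minus. apply continuity_pt_const; intros ??; auto.
        apply (continuity_pt_comp (fun y => x - y) Rabs). apply continuity_pt_minus. apply continuity_pt_const; intros ??; auto.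
        apply derivable_continuous_pt, derivable_pt_id. apply Rcontinuity_abs.
      + apply (lip_continuity _ 1); [lra|]. intros u v. unfold Rmax; repeat destruct Rle_dec; unfold Rabs; repeat destruct Rcase_abs; lra. }
  assert (Hmin : forall x, exists y, a <= y <= b /\ forall y', a <= y' <= b -> psi x y <= psi x y').
  { intros x. destruct (continuity_ab_min (fun y => psi x y) a b Hab' (fun y _ => Hcont x y)) as [y [Hy Hyi]].
    exists y; split; auto. }
  set (ys := fun x => proj1_sig (constructive_indefinite_description _ (Hmin x))).
  assert (Hys : forall x, a <= ys x <= b /\ forall y', a <= y' <= b -> psi x (ys x) <= psi x y').
  { intros x. unfold ys. destruct (constructive_indefinite_description _ (Hmin x)) as [y Hy]. simpl. auto. }
  set (Phi := fun x => psi x (ys x)).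
  assert (HPhi : forall x x', a <= x <= b -> a <= x' <= b -> Phi x <= Phi x' + (Kc + 1) * Rabs (x - x')).
  { intros x x' Hx Hx'. unfold Phi. destruct (Hys x) as [_ H1]. destruct (Hys x') as [H2 _].
    eapply Rle_trans; [apply (H1 (ys x')); auto|]. unfold psi.
    pose proof (vnorm_sub_triangle (c x) (c x') (c (ys x'))). pose proof (HL x x' Hx Hx').
    assert (Rmax 0 (eta - Rabs (x - ys x')) <= Rmax 0 (eta - Rabs (x' - ys x')) + Rabs (x - x')).
    { pose proof (Rabs_triang (x' - x) (x - ys x')). replace (x' - x + (x - ys x')) with (x' - ys x') in H3 by ring.
      rewrite (Rabs_minus_sym x' x) in H3. unfold Rmax; repeat destruct Rle_dec; pose proof (Rabs_pos (x - x')); lra. }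
    lra. }
  assert (HPc : forall x, continuity_pt (fun s => Phi (clamp a b s)) x).
  { apply (lip_continuity _ (Kc + 1)); [lra|]. intros u v.
    pose proof (HPhi (clamp a b u) (clamp a b v) (clamp_in a b u Hab') (clamp_in a b v Hab')).
    pose proof (HPhi (clamp a b v) (clamp a b u) (clamp_in a b v Hab') (clamp_in a b u Hab')).
    pose proof (clamp_lip a b u v). rewrite Rabs_minus_sym in H0.
    apply Rabs_le; split; [|]; try nra. }
  destruct (continuity_ab_min _ a b Hab' (fun x _ => HPc x)) as [x0 [Hx0 Hx0i]].
  rewrite clamp_id in Hx0 by auto.
  assert (Hpos : 0 < Phi x0).
  { unfold Phi, psi. destruct (Hys x0) as [Hy _].
    pose proof (vnorm_ge0 (vsub (c x0) (c (ys x0)))).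
    assert (0 <= Rmax 0 (eta - Rabs (x0 - ys x0))) by apply Rmax_l.
    destruct (Req_dec (vnorm (vsub (c x0) (c (ys x0)))) 0) as [Hz|Hz]; [|lra].
    assert (c x0 = c (ys x0)).
    { assert (Hd : dot (vsub (c x0) (c (ys x0))) (vsub (c x0) (c (ys x0))) = 0) by (rewrite <- vnorm_sq, Hz; ring).
      unfold dot, vsub in Hd; simpl in Hd. apply sq3_zero in Hd. apply R3_ext; lra. }
    pose proof (Hemb _ _ Hx0i Hy H1) as E. rewrite <- E in *. replace (x0 - x0) with 0 by ring. rewrite Rabs_R0.
    rewrite Rmax_right by lra. lra. }
  exists (Phi x0). split; auto. intros x y Hx Hy Hxy.
  pose proof (Hx0 x Hx). rewrite clamp_id in H by auto.
  destruct (Hys x) as [_ Hmn]. specialize (Hmn y Hy). unfold Phi in H.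
  unfold Phi. unfold psi in Hmn, H |- *. rewrite (Rmax_left 0 (eta - Rabs (x - y))) in Hmn by lra. lra.
Qed.


Lemma frame_dots t : a <= t <= b ->
  dot (ce t) (ce t) = 1 /\ dot (normal cdd t) (normal cdd t) = 1 /\ dot (binormal ce cdd t) (binormal ce cdd t) = 1 /\
  dot (ce t) (normal cdd t) = 0 /\ dot (normal cdd t) (ce t) = 0 /\
  dot (ce t) (binormal ce cdd t) = 0 /\ dot (binormal ce cdd t) (ce t) = 0 /\
  dot (normal cdd t) (binormal ce cdd t) = 0 /\ dot (binormal ce cdd t) (normal cdd t) = 0.
Proof.
  intros Ht. rewrite (dot_comm (normal cdd t) (ce t)), (dot_comm (binormal ce cdd t) (ce t)), (dot_comm (binormal ce cdd t) (normal cdd t)).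
  rewrite frame_ee, frame_nn, frame_bb, frame_en, frame_eb, frame_nb; auto. repeat split; auto.
Qed.

Ltac dot_expand := repeat (rewrite ?dot_addl, ?dot_addr, ?dot_subl, ?dot_subr, ?dot_scalel, ?dot_scaler).
Ltac dot_expand_in H := repeat (rewrite ?dot_addl, ?dot_addr, ?dot_subl, ?dot_subr, ?dot_scalel, ?dot_scaler in H).

Section Sheet.
Variables (al ald be : R -> R).
Hypothesis Hald : forall t, derivable_pt_lim al t (ald t).
Hypothesis Hal_LB : LB a b al.
Hypothesis Hald_LB : LB a b ald.
Hypothesis Hal : forall t, a <= t <= b -> 0 < Rabs (al t) < PI / 2.
Hypothesis Hbe : developable_angle a b ce cdd nd al ald be.

Lemma cos_al_pos t : a <= t <= b -> 0 < cos (al t).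
Proof using All. intros Ht. destruct (Hal t Ht) as [H1 H2]. apply cos_gt_0; unfold Rabs in H2; destruct Rcase_abs; lra. Qed.

Lemma sin_al_sq_pos t : a <= t <= b -> 0 < sin (al t) * sin (al t).
Proof using All.
  intros Ht. destruct (Hal t Ht) as [H1 H2]. pose proof PI2_1.
  unfold Rabs in *; destruct Rcase_abs.
  - assert (0 < sin (- al t)) by (apply sin_gt_0; lra). rewrite sin_neg in H0. nra.
  - assert (0 < sin (al t)) by (apply sin_gt_0; lra). nra.
Qed.

Definition gf t := (ald t + torsion ce cdd nd t) * sin (al t) * / (curvature cdd t * (sin (al t) * sin (al t))).

Lemma sin_be_pos t : a <= t <= b -> 0 < sin (be t).
Proof using All. intros Ht. destruct (Hbe t Ht) as [[H1 H2] _]. apply sin_gt_0; auto. Qed.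

Lemma cos_be_eq t : a <= t <= b -> cos (be t) = gf t * sin (be t).
Proof using All.
  intros Ht. destruct (Hbe t Ht) as [_ Hd]. pose proof (sin_be_pos t Ht). pose proof (Hkappa t Ht).
  pose proof (sin_al_sq_pos t Ht). unfold gf.
  assert (sin (al t) <> 0) by (intro Hz; rewrite Hz in H1; lra).
  apply (f_equal (fun x => x * sin (be t))) in Hd. unfold Rdiv in Hd.
  replace (cos (be t) * / sin (be t) * sin (be t)) with (cos (be t)) in Hd by (field; lra).
  assert (curvature cdd t <> 0) by lra. rewrite Hd. field. repeat split; auto.
Qed.

Lemma sin_be_eq t : a <= t <= b -> sin (be t) = / sqrt (1 + gf t * gf t).
Proof using All.
  intros Ht. pose proof (sin_be_pos t Ht). pose proof (cos_be_eq t Ht).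
  pose proof (sin2_cos2 (be t)). rewrite H0 in H1.
  assert (E : 1 + gf t * gf t = / sin (be t) * / sin (be t)).
  { apply (Rmult_eq_reg_r (sin (be t) * sin (be t))); [|nra]. field_simplify; [|lra]. unfold Rsqr in H1. nra. }
  rewrite E, sqrt_square. field; lra. apply Rlt_le, Rinv_0_lt_compat; auto.
Qed.

Lemma sheet_angles : exists sg, 0 < sg /\ sg <= 1 /\ (forall t, a <= t <= b -> sg <= sin (be t)) /\
  (forall t, a <= t <= b -> sg <= cos (al t)) /\ (forall t, a <= t <= b -> sg <= sin (al t) * sin (al t)) /\
  LB a b (fun t => sin (be t)) /\ LB a b (fun t => cos (be t)) /\ LB a b (fun t => cos (al t)) /\ LB a b (fun t => sin (al t)).
Proof using All.
  destruct frame_LB as [km [Hkm [Hkml [Lk [Lc [Le [Ld [Ln [Lb [Lnd Lt]]]]]]]]]].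
  assert (Lsa : LB a b (fun t => sin (al t))) by (apply LB_sin; auto).
  assert (Lca : LB a b (fun t => cos (al t))) by (apply LB_cos; auto).
  assert (Lss : LB a b (fun t => sin (al t) * sin (al t))) by (apply LB_mult; auto).
  destruct (LB_lower a b _ Hab' Lss sin_al_sq_pos) as [s2 [Hs2 Hs2l]].
  destruct (LB_lower a b _ Hab' Lca cos_al_pos) as [s3 [Hs3 Hs3l]].
  assert (Lg : LB a b gf).
  { unfold gf. apply LB_mult; [apply LB_mult; [apply LB_plus|]; auto|].
    apply (LB_inv a b _ (km * s2)). nra. apply LB_mult; auto.
    intros t Ht. apply Rmult_le_compat; try lra; auto. }
  assert (Lq : LB a b (fun t => sqrt (1 + gf t * gf t))).
  { apply (LB_sqrt a b _ 1); [lra| |]. apply LB_plus; [apply LB_const|apply LB_mult; auto].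
    intros t _. pose proof (sq_nonneg (gf t)); lra. }
  assert (Lsb : LB a b (fun t => sin (be t))).
  { apply (LB_ext a b (fun t => / sqrt (1 + gf t * gf t))); [|intros; apply sin_be_eq; auto].
    apply (LB_inv a b _ 1); [lra|auto|]. intros t _. apply Rle_trans with (sqrt 1); [rewrite sqrt_1; lra|apply sqrt_le_1_alt].
    pose proof (sq_nonneg (gf t)); lra. }
  assert (Lcb : LB a b (fun t => cos (be t))).
  { apply (LB_ext a b (fun t => gf t * sin (be t))); [apply LB_mult; auto|intros; apply cos_be_eq; auto]. }
  destruct (LB_lower a b _ Hab' Lsb sin_be_pos) as [s1 [Hs1 Hs1l]].
  set (sg := Rmin 1 (Rmin s1 (Rmin s2 s3))).
  assert (sg <= 1) by apply Rmin_l.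
  assert (sg <= s1) by (unfold sg; eapply Rle_trans; [apply Rmin_r|apply Rmin_l]).
  assert (sg <= s2) by (unfold sg; eapply Rle_trans; [apply Rmin_r|]; eapply Rle_trans; [apply Rmin_r|apply Rmin_l]).
  assert (sg <= s3) by (unfold sg; eapply Rle_trans; [apply Rmin_r|]; eapply Rle_trans; [apply Rmin_r|apply Rmin_r]).
  assert (0 < sg) by (unfold sg; repeat apply Rmin_glb_lt; lra).
  exists sg. repeat split; auto; intros t Ht.
  - specialize (Hs1l t Ht); lra.
  - specialize (Hs3l t Ht); lra.
  - specialize (Hs2l t Ht); lra.
Qed.

Lemma uvec_dots t : a <= t <= b ->
  dot (uvec ce cdd al t) (uvec ce cdd al t) = 1 /\ dot (ce t) (uvec ce cdd al t) = 0 /\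
  dot (normal cdd t) (uvec ce cdd al t) = cos (al t) /\ dot (binormal ce cdd t) (uvec ce cdd al t) = sin (al t) /\
  dot (mvec ce cdd al t) (uvec ce cdd al t) = 0 /\ dot (mvec ce cdd al t) (mvec ce cdd al t) = 1 /\
  dot (mvec ce cdd al t) (ce t) = 0 /\ dot (mvec ce cdd al t) (normal cdd t) = - sin (al t) /\
  dot (mvec ce cdd al t) (binormal ce cdd t) = cos (al t).
Proof using All.
  intros Ht. destruct (frame_dots t Ht) as [D1 [D2 [D3 [D4 [D5 [D6 [D7 [D8 D9]]]]]]]].
  pose proof (sin2_cos2 (al t)) as SC. unfold Rsqr in SC.
  unfold uvec, mvec. dot_expand. rewrite ?D1, ?D2, ?D3, ?D4, ?D5, ?D6, ?D7, ?D8, ?D9.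
  repeat split; ring_simplify; try lra.
Qed.

Lemma xi_dots t : a <= t <= b ->
  dot (ruling ce cdd al be t) (ruling ce cdd al be t) = 1 /\
  dot (ce t) (ruling ce cdd al be t) = cos (be t) /\
  dot (normal cdd t) (ruling ce cdd al be t) = sin (be t) * cos (al t) /\
  dot (binormal ce cdd t) (ruling ce cdd al be t) = sin (be t) * sin (al t) /\
  dot (mvec ce cdd al t) (ruling ce cdd al be t) = 0.
Proof using All.
  intros Ht. destruct (uvec_dots t Ht) as [U1 [U2 [U3 [U4 [U5 [U6 [U7 [U8 U9]]]]]]]].
  destruct (frame_dots t Ht) as [D1 [D2 [D3 [D4 [D5 [D6 [D7 [D8 D9]]]]]]]].
  assert (U2' := U2). rewrite dot_comm in U2'.
  pose proof (sin2_cos2 (be t)) as SC. unfold Rsqr in SC.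
  rewrite ruling_eq. dot_expand. rewrite ?U1, ?U2, ?U2', ?U3, ?U4, ?U5, ?U7, ?D1, ?D4, ?D5, ?D6, ?D7.
  repeat split; ring_simplify; try lra.
Qed.




Lemma xi_LB : LBv a b (ruling ce cdd al be).
Proof using All.
  destruct frame_LB as [km [Hkm [Hkml [Lk [Lc [Le [Ld [Ln [Lb [Lnd Lt]]]]]]]]]].
  destruct sheet_angles as [sg [_ [_ [_ [_ [_ [Lsb [Lcb [Lca Lsa]]]]]]]]].
  unfold ruling. apply LBv_vadd; apply LBv_vscale; auto. apply LBv_vadd; apply LBv_vscale; auto.
Qed.

Lemma B_deriv s0 : a <= s0 <= b ->
  derivable_pt_lim (fun s => dot (mvec ce cdd al s0) (uvec ce cdd al s)) s0 (ald s0 + torsion ce cdd nd s0).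
Proof using All.
  intros Hs0. eapply dlim_eq.
  - apply deriv_dot_const. unfold uvec.
    eapply (deriv_vadd (fun s => vscale (cos (al s)) (normal cdd s)) _ (fun s => vscale (sin (al s)) (binormal ce cdd s))).
    + apply deriv_scale; [|apply Hnd; auto]. apply (derivable_pt_lim_comp al cos); auto. apply derivable_pt_lim_cos.
    + apply deriv_scale; [|apply deriv_cross; [apply Hcdd|apply Hnd; auto]]. apply (derivable_pt_lim_comp al sin); auto. apply derivable_pt_lim_sin.
  - simpl. destruct (uvec_dots s0 Hs0) as [_ [_ [_ [_ [_ [_ [_ [M8 M9]]]]]]]].
    assert (V3 : dot (mvec ce cdd al s0) (nd s0) = cos (al s0) * torsion ce cdd nd s0).
    { unfold mvec, torsion. dot_expand. rewrite (dot_comm (binormal ce cdd s0)), frame_n_nd; auto. ring. }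
    assert (V4 : dot (mvec ce cdd al s0) (cross (cdd s0) (normal cdd s0)) = 0).
    { rewrite (cdd_eq s0 Hs0), cross_self_scale, dot_zero_r. auto. }
    assert (V5 : dot (mvec ce cdd al s0) (cross (ce s0) (nd s0)) = sin (al s0) * torsion ce cdd nd s0).
    { unfold mvec, torsion. dot_expand. unfold binormal at 1. rewrite binet_cauchy, triple_swap.
      rewrite frame_ee, frame_n_nd, frame_e_nd, (dot_comm (normal cdd s0) (ce s0)), frame_en; auto. unfold binormal. ring. }
    dot_expand. rewrite M8, M9, V3, V4, V5.
    pose proof (sin2_cos2 (al s0)) as SC. unfold Rsqr in SC.
    replace (ald s0 + torsion ce cdd nd s0) with ((ald s0 + torsion ce cdd nd s0) * (sin (al s0) * sin (al s0) + cos (al s0) * cos (al s0))) by (rewrite SC; ring).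
    ring.
Qed.

Lemma A_deriv s0 : a <= s0 <= b ->
  derivable_pt_lim (fun s => dot (mvec ce cdd al s0) (ce s)) s0 (- curvature cdd s0 * sin (al s0)).
Proof using All.
  intros Hs0. eapply dlim_eq; [apply deriv_dot_const; apply Hcdd|].
  destruct (uvec_dots s0 Hs0) as [_ [_ [_ [_ [_ [_ [_ [M8 M9]]]]]]]].
  rewrite (cdd_eq s0 Hs0), dot_scaler, M8. ring.
Qed.

Lemma deriv_approx f x l : derivable_pt_lim f x l -> forall eta, 0 < eta -> exists d, 0 < d /\
  forall y, Rabs (y - x) < d -> Rabs (f y - f x - l * (y - x)) <= eta * Rabs (y - x).
Proof using All.
  intros Hd eta Heta. destruct (Hd eta Heta) as [[d Hdp] Hdd]. exists d. split; auto.
  intros y Hy. destruct (Req_dec y x) as [E|E].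
  - subst. replace (x - x) with 0 by ring. rewrite Rabs_R0. replace (f x - f x - l * 0) with 0 by ring. rewrite Rabs_R0; lra.
  - specialize (Hdd (y - x) ltac:(lra) Hy). replace (x + (y - x)) with y in Hdd by ring.
    assert (0 < Rabs (y - x)) by (apply Rabs_pos_lt; lra).
    replace (f y - f x - l * (y - x)) with (((f y - f x) / (y - x) - l) * (y - x)) by (field; lra).
    rewrite Rabs_mult. apply Rmult_le_compat_r; lra.
Qed.

Lemma dev_point s0 : a <= s0 <= b -> forall eta, 0 < eta -> exists rho, 0 < rho /\
  forall s, a <= s <= b -> Rabs (s - s0) < rho ->
  Rabs (dot (mvec ce cdd al s0) (ruling ce cdd al be s)) <= eta * Rabs (s - s0).
Proof using All.
  intros Hs0 eta Heta.
  destruct sheet_angles as [sg [_ [_ [_ [_ [_ [Lsb [Lcb _]]]]]]]].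
  destruct (LB_lip _ _ _ Lsb) as [K1 [HK1 L1]]. destruct (LB_lip _ _ _ Lcb) as [K2 [HK2 L2]].
  set (A' := - curvature cdd s0 * sin (al s0)). set (B' := ald s0 + torsion ce cdd nd s0).
  destruct (deriv_approx _ _ _ (A_deriv s0 Hs0) (eta / 4) ltac:(lra)) as [d1 [Hd1 HA]].
  destruct (deriv_approx _ _ _ (B_deriv s0 Hs0) (eta / 4) ltac:(lra)) as [d2 [Hd2 HB]].
  set (C := (K1 + K2) * (Rabs A' + Rabs B') + 1).
  assert (HC : 0 < C) by (unfold C; pose proof (Rabs_pos A'); pose proof (Rabs_pos B'); nra).
  exists (Rmin (Rmin d1 d2) (eta / (2 * C))). split.
  { repeat apply Rmin_glb_lt; auto. apply Rdiv_lt_0_compat; lra. }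
  intros s Hs Hss.
  assert (Hs1 : Rabs (s - s0) < d1) by (eapply Rlt_le_trans; [exact Hss|]; eapply Rle_trans; [apply Rmin_l|apply Rmin_l]).
  assert (Hs2 : Rabs (s - s0) < d2) by (eapply Rlt_le_trans; [exact Hss|]; eapply Rle_trans; [apply Rmin_l|apply Rmin_r]).
  assert (Hs3 : Rabs (s - s0) < eta / (2 * C)) by (eapply Rlt_le_trans; [exact Hss|]; apply Rmin_r).
  specialize (HA s Hs1). specialize (HB s Hs2).
  destruct (uvec_dots s0 Hs0) as [_ [_ [_ [_ [M5 [_ [M7 _]]]]]]].
  rewrite M7 in HA. rewrite M5 in HB.
  (* developability at s0 *)
  assert (Hdev : cos (be s0) * A' + sin (be s0) * B' = 0).
  { unfold A', B'. rewrite (cos_be_eq s0 Hs0). unfold gf. pose proof (sin_al_sq_pos s0 Hs0). pose proof (Hkappa s0 Hs0).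
    assert (sin (al s0) <> 0) by (intro Hz; rewrite Hz in H; lra). assert (curvature cdd s0 <> 0) by lra. field. repeat split; auto. }
  rewrite ruling_eq, dot_addr, !dot_scaler.
  set (A := dot (mvec ce cdd al s0) (ce s)) in *. set (B := dot (mvec ce cdd al s0) (uvec ce cdd al s)) in *.
  set (D := s - s0) in *.
  assert (E : cos (be s) * A + sin (be s) * B =
    D * ((cos (be s) - cos (be s0)) * A' + (sin (be s) - sin (be s0)) * B') +
    cos (be s) * (A - 0 - A' * D) + sin (be s) * (B - 0 - B' * D)).
  { replace (cos (be s) * A + sin (be s) * B) with
      (D * ((cos (be s) - cos (be s0)) * A' + (sin (be s) - sin (be s0)) * B') + D * (cos (be s0) * A' + sin (be s0) * B') +
    cos (be s) * (A - 0 - A' * D) + sin (be s) * (B - 0 - B' * D)) by ring. rewrite Hdev. ring. }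
  rewrite E.
  pose proof (L1 s s0 Hs Hs0). pose proof (L2 s s0 Hs Hs0). fold D in H, H0.
  pose proof (Rabs_pos D). pose proof (Rabs_pos A'). pose proof (Rabs_pos B').
  pose proof (COS_bound (be s)). pose proof (SIN_bound (be s)).
  assert (T1 : Rabs (D * ((cos (be s) - cos (be s0)) * A' + (sin (be s) - sin (be s0)) * B')) <= Rabs D * (Rabs D * ((K1 + K2) * (Rabs A' + Rabs B')))).
  { rewrite Rabs_mult. apply Rmult_le_compat_l; auto. eapply Rle_trans; [apply Rabs_triang|]. rewrite !Rabs_mult.
    pose proof (Rabs_pos (cos (be s) - cos (be s0))). pose proof (Rabs_pos (sin (be s) - sin (be s0))).
    assert (Rabs (cos (be s) - cos (be s0)) * Rabs A' <= K2 * Rabs D * Rabs A') by (apply Rmult_le_compat_r; auto).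
    assert (Rabs (sin (be s) - sin (be s0)) * Rabs B' <= K1 * Rabs D * Rabs B') by (apply Rmult_le_compat_r; auto).
    nra. }
  assert (T2 : Rabs (cos (be s) * (A - 0 - A' * D)) <= eta / 4 * Rabs D).
  { rewrite Rabs_mult. apply Rle_trans with (1 * (eta / 4 * Rabs D)); [|lra].
    apply Rmult_le_compat; auto using Rabs_pos. apply Rabs_le; lra. }
  assert (T3 : Rabs (sin (be s) * (B - 0 - B' * D)) <= eta / 4 * Rabs D).
  { rewrite Rabs_mult. apply Rle_trans with (1 * (eta / 4 * Rabs D)); [|lra].
    apply Rmult_le_compat; auto using Rabs_pos. apply Rabs_le; lra. }
  assert (T4 : Rabs D * ((K1 + K2) * (Rabs A' + Rabs B')) <= eta / 2).
  { apply Rle_trans with (eta / (2 * C) * C). apply Rmult_le_compat; try lra. nra. unfold C; lra.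
    right. field. lra. }
  eapply Rle_trans; [apply Rabs_triang|]. eapply Rle_trans; [apply Rplus_le_compat_r; apply Rabs_triang|].
  nra.
Qed.

Lemma xi_u t : a <= t <= b -> dot (uvec ce cdd al t) (ruling ce cdd al be t) = sin (be t).
Proof using All.
  intros Ht. destruct (uvec_dots t Ht) as [U1 [U2 _]]. rewrite ruling_eq. dot_expand. rewrite U1, (dot_comm _ (ce t)), U2. ring.
Qed.

Lemma strip_decomp s s' w w' :
  vsub (strip c ce cdd al be s w) (strip c ce cdd al be s' w') =
  vadd (vadd (vsub (vsub (c s) (c s')) (vscale (s - s') (ce s')))
             (vadd (vscale (s - s') (ce s')) (vscale (w - w') (ruling ce cdd al be s'))))
       (vscale w (vsub (ruling ce cdd al be s) (ruling ce cdd al be s'))).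
Proof. apply R3_ext; unfold strip, vsub, vadd, vscale; simpl; ring. Qed.

Lemma main_lower s' x y sg : a <= s' <= b -> 0 < sg <= 1 -> sg <= sin (be s') ->
  sg / 3 * (Rabs x + Rabs y) <= vnorm (vadd (vscale x (ce s')) (vscale y (ruling ce cdd al be s'))).
Proof using All.
  intros Hs' Hsg Hsb. set (M := vadd (vscale x (ce s')) (vscale y (ruling ce cdd al be s'))).
  destruct (xi_dots s' Hs') as [_ [X2 _]]. destruct (uvec_dots s' Hs') as [U1 [U2 _]].
  pose proof (xi_u s' Hs') as XU. destruct (frame_dots s' Hs') as [D1 _].
  assert (E1 : dot M (ce s') = x + y * cos (be s')).
  { unfold M. dot_expand. rewrite D1, (dot_comm (ruling ce cdd al be s') (ce s')), X2. ring. }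
  assert (E2 : dot M (uvec ce cdd al s') = y * sin (be s')).
  { unfold M. dot_expand. rewrite U2, (dot_comm (ruling ce cdd al be s') (uvec ce cdd al s')), XU. ring. }
  pose proof (abs_dot_unit M (ce s') D1) as B1. rewrite E1 in B1.
  pose proof (abs_dot_unit M (uvec ce cdd al s') U1) as B2. rewrite E2 in B2.
  pose proof (COS_bound (be s')). rewrite Rabs_mult, (Rabs_pos_eq (sin (be s'))) in B2 by lra.
  assert (Rabs (x + y * cos (be s')) >= Rabs x - Rabs y).
  { pose proof (Rabs_triang (x + y * cos (be s')) (- (y * cos (be s')))).
    replace (x + y * cos (be s') + - (y * cos (be s'))) with x in H0 by ring. rewrite Rabs_Ropp, Rabs_mult in H0.
    assert (Rabs (cos (be s')) <= 1) by (apply Rabs_le; lra). pose proof (Rabs_pos y).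
    assert (Rabs y * Rabs (cos (be s')) <= Rabs y) by nra. lra. }
  pose proof (Rabs_pos x). pose proof (Rabs_pos y).
  assert (Rabs y * sg <= Rabs y * sin (be s')) by (apply Rmult_le_compat_l; lra).
  destruct (Rle_dec (Rabs x) (2 * Rabs y)); nra.
Qed.

Lemma same_sheet_bound : exists rho eps1 k0, 0 < rho /\ 0 < eps1 /\ 0 < k0 /\
  forall s s' w w', a <= s <= b -> a <= s' <= b -> Rabs (s - s') <= rho -> Rabs w <= eps1 ->
  k0 * (Rabs (s - s') + Rabs (w - w')) <= vnorm (vsub (strip c ce cdd al be s w) (strip c ce cdd al be s' w')).
Proof using All.
  destruct sheet_angles as [sg [Hsg [Hsg1 [Hsb _]]]].
  destruct (LBv_lip a b _ xi_LB) as [Kx [HKx Lx]].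
  destruct taylor_c as [K [HK HT]].
  exists (sg / (12 * (K + 1))), (sg / (12 * (Kx + 1))), (sg / 6).
  repeat split; try (apply Rdiv_lt_0_compat; lra).
  intros s s' w w' Hs Hs' Hss Hw.
  rewrite strip_decomp.
  pose proof (main_lower s' (s - s') (w - w') sg Hs' (conj Hsg Hsg1) (Hsb s' Hs')) as HM.
  pose proof (HT s s' Hs Hs') as HR. pose proof (Lx s s' Hs Hs') as HX.
  pose proof (vnorm_rev_triangle (vadd (vadd (vscale (s - s') (ce s')) (vscale (w - w') (ruling ce cdd al be s')))
      (vsub (vsub (c s) (c s')) (vscale (s - s') (ce s')))) (vscale w (vsub (ruling ce cdd al be s) (ruling ce cdd al be s')))) as T1.
  pose proof (vnorm_rev_triangle (vadd (vscale (s - s') (ce s')) (vscale (w - w') (ruling ce cdd al be s')))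
      (vsub (vsub (c s) (c s')) (vscale (s - s') (ce s')))) as T2.
  replace (vadd (vadd (vsub (vsub (c s) (c s')) (vscale (s - s') (ce s'))) (vadd (vscale (s - s') (ce s')) (vscale (w - w') (ruling ce cdd al be s'))))
     (vscale w (vsub (ruling ce cdd al be s) (ruling ce cdd al be s'))))
    with (vadd (vadd (vadd (vscale (s - s') (ce s')) (vscale (w - w') (ruling ce cdd al be s')))
      (vsub (vsub (c s) (c s')) (vscale (s - s') (ce s')))) (vscale w (vsub (ruling ce cdd al be s) (ruling ce cdd al be s'))))
    by (apply R3_ext; unfold vadd, vsub, vscale; simpl; ring).
  rewrite vnorm_scale in T1.
  set (D := Rabs (s - s')) in *.
  assert (HD2 : (s - s') * (s - s') = D * D) by (unfold D; rewrite <- Rabs_mult, Rabs_pos_eq; [ring|apply sq_nonneg]).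
  rewrite HD2 in HR.
  pose proof (Rabs_pos (s - s')). fold D in H. pose proof (Rabs_pos w). pose proof (Rabs_pos (w - w')).
  assert (E1 : K * (D * D) <= sg / 12 * D).
  { apply Rle_trans with (K * (sg / (12 * (K + 1))) * D). 
    replace (K * (D * D)) with (K * D * D) by ring. apply Rmult_le_compat_r; auto. apply Rmult_le_compat_l; auto.
    replace (K * (sg / (12 * (K + 1))) * D) with (K / (K + 1) * (sg / 12) * D) by (field; lra).
    apply Rmult_le_compat_r; auto. assert (K / (K + 1) <= 1) by (apply frac_le1; lra).
    assert (0 <= (1 - K / (K + 1)) * (sg / 12)) by (apply Rmult_le_pos; lra). lra. }
  assert (E2 : Rabs w * vnorm (vsub (ruling ce cdd al be s) (ruling ce cdd al be s')) <= sg / 12 * D).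
  { apply Rle_trans with (sg / (12 * (Kx + 1)) * (Kx * D)). apply Rmult_le_compat; auto using vnorm_ge0.
    replace (sg / (12 * (Kx + 1)) * (Kx * D)) with (Kx / (Kx + 1) * (sg / 12) * D) by (field; lra).
    apply Rmult_le_compat_r; auto. assert (Kx / (Kx + 1) <= 1) by (apply frac_le1; lra).
    assert (0 <= (1 - Kx / (Kx + 1)) * (sg / 12)) by (apply Rmult_le_pos; lra). lra. }
  assert (0 <= sg * Rabs (w - w')) by (apply Rmult_le_pos; lra). assert (0 <= sg * D) by (apply Rmult_le_pos; lra). lra.
Qed.

End Sheet.


Section Sheet2.
Variables (al ald be : R -> R).
Hypothesis Hald : forall t, derivable_pt_lim al t (ald t).
Hypothesis Hal_LB : LB a b al.
Hypothesis Hald_LB : LB a b ald.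
Hypothesis Hal : forall t, a <= t <= b -> 0 < Rabs (al t) < PI / 2.
Hypothesis Hbe : developable_angle a b ce cdd nd al ald be.

Lemma flat_core k0 B s0 w0 eta : 0 < k0 -> 0 <= B -> a <= s0 <= b -> 0 < eta -> exists r0, 0 < r0 /\
  forall s w, a <= s <= b -> Rabs w <= B ->
  let X := vsub (strip c ce cdd al be s w) (strip c ce cdd al be s0 w0) in
  k0 * Rabs (s - s0) <= vnorm X -> vnorm X < r0 ->
  Rabs (dot (mvec ce cdd al s0) X) <= eta * vnorm X.
Proof using All.
  intros Hk0 HB Hs0 Heta.
  destruct taylor_c as [K [HK HT]].
  set (eta' := eta * k0 / (2 * (B + 1))).
  assert (He' : 0 < eta') by (unfold eta'; apply Rdiv_lt_0_compat; nra).
  destruct (dev_point al ald be Hald Hal_LB Hald_LB Hal Hbe s0 Hs0 eta' He') as [rho' [Hrho' Hdev]].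
  exists (Rmin (k0 * rho') (eta * k0 * k0 / (2 * (K + 1)))). split.
  { apply Rmin_glb_lt. nra. apply Rdiv_lt_0_compat; [|lra]. repeat apply Rmult_lt_0_compat; lra. }
  intros s w Hs Hw X HX HXr.
  assert (Hr1 : vnorm X < k0 * rho') by (eapply Rlt_le_trans; [exact HXr|apply Rmin_l]).
  assert (Hr2 : vnorm X < eta * k0 * k0 / (2 * (K + 1))) by (eapply Rlt_le_trans; [exact HXr|apply Rmin_r]).
  set (D := Rabs (s - s0)) in *. pose proof (Rabs_pos (s - s0)) as HD0. fold D in HD0.
  assert (HDr : D < rho') by (apply Rmult_lt_reg_l with k0; lra).
  destruct (uvec_dots al ald be Hald Hal_LB Hald_LB Hal Hbe s0 Hs0) as [_ [_ [_ [_ [_ [M6 [M7 _]]]]]]].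
  destruct (xi_dots al ald be Hald Hal_LB Hald_LB Hal Hbe s0 Hs0) as [_ [_ [_ [_ X5]]]].
  set (m0 := mvec ce cdd al s0) in *.
  set (R1 := vsub (vsub (c s) (c s0)) (vscale (s - s0) (ce s0))).
  assert (EX : X = vadd (vadd R1 (vscale (s - s0) (ce s0))) (vsub (vscale w (ruling ce cdd al be s)) (vscale w0 (ruling ce cdd al be s0)))).
  { unfold X, R1. apply R3_ext; unfold strip, vadd, vsub, vscale; simpl; ring. }
  assert (Edot : dot m0 X = dot m0 R1 + w * dot m0 (ruling ce cdd al be s)).
  { rewrite EX. dot_expand. rewrite M7, X5. ring. }
  rewrite Edot.
  pose proof (abs_dot_unit R1 m0 M6) as HR1. pose proof (HT s s0 Hs Hs0) as HT1. fold R1 in HT1.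
  assert (HD2 : (s - s0) * (s - s0) = D * D) by (unfold D; rewrite <- Rabs_mult, Rabs_pos_eq; [ring|apply sq_nonneg]).
  rewrite HD2 in HT1. rewrite dot_comm in HR1.
  specialize (Hdev s Hs HDr). fold D in Hdev.
  assert (HW : Rabs (w * dot m0 (ruling ce cdd al be s)) <= B * (eta' * D)).
  { rewrite Rabs_mult. apply Rmult_le_compat; auto using Rabs_pos. }
  assert (HkD : k0 * D <= vnorm X) by auto.
  assert (HKD : K * D * D <= eta / 2 * vnorm X).
  { assert (K * D <= eta * k0 / 2).
    { apply Rle_trans with (K * (eta * k0 / (2 * (K + 1)))).
      apply Rmult_le_compat_l; auto. apply Rmult_le_reg_l with k0; auto.
      apply Rle_trans with (vnorm X); auto. left. replace (k0 * (eta * k0 / (2 * (K + 1)))) with (eta * k0 * k0 / (2 * (K + 1))) by (field; lra). auto.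
      replace (K * (eta * k0 / (2 * (K + 1)))) with (K / (K + 1) * (eta * k0 / 2)) by (field; lra).
      assert (K / (K + 1) <= 1) by (apply frac_le1; lra).
      assert (0 <= (1 - K / (K + 1)) * (eta * k0 / 2)) by (apply Rmult_le_pos; nra). lra. }
    apply Rle_trans with (eta * k0 / 2 * D). apply Rmult_le_compat_r; auto.
    replace (eta * k0 / 2 * D) with (eta / 2 * (k0 * D)) by field. apply Rmult_le_compat_l; lra. }
  assert (HBD : B * (eta' * D) <= eta / 2 * vnorm X).
  { unfold eta'. replace (B * (eta * k0 / (2 * (B + 1)) * D)) with (B / (B + 1) * (eta / 2) * (k0 * D)) by (field; lra).
    assert (B / (B + 1) <= 1) by (apply frac_le1; lra).
    assert (0 <= B / (B + 1)) by (apply Rdiv_le_0_compat; lra).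
    apply Rle_trans with (B / (B + 1) * (eta / 2) * vnorm X). apply Rmult_le_compat_l; [nra|auto].
    apply Rmult_le_compat_r; [apply vnorm_ge0|nra]. }
  eapply Rle_trans; [apply Rabs_triang|]. lra.
Qed.

End Sheet2.

Lemma nat_unbounded x : exists N : nat, x < INR N.
Proof.
  destruct (archimed (Rabs x)) as [H1 _]. pose proof (Rabs_pos x).
  assert (Hz : (0 < up (Rabs x))%Z) by (apply lt_0_IZR; lra).
  exists (Z.to_nat (up (Rabs x))). rewrite INR_IZR_INZ, Znat.Z2Nat.id by lia.
  pose proof (Rle_abs x). lra.
Qed.

Lemma step2_ratio T : isometry T -> forall h : R -> R,
  (forall t, a <= t <= b -> a <= h t <= b /\ T (c t) = c (h t)) ->
  forall theta, 0 < theta <= 1/10 -> exists dt, 0 < dt /\ forall x y, a <= x <= b -> a <= y <= b -> Rabs (x - y) <= dt ->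
    (1 - theta) * Rabs (x - y) <= (1 + theta) * Rabs (h x - h y) /\
    (1 - theta) * Rabs (h x - h y) <= (1 + theta) * Rabs (x - y).
Proof.
  intros HTi h Hh theta Hth.
  destruct taylor_c as [K [HK HT]].
  assert (HD : forall x y, a <= x <= b -> a <= y <= b ->
    Rabs (vnorm (vsub (c x) (c y)) - Rabs (x - y)) <= K * (Rabs (x - y) * Rabs (x - y))).
  { intros x y Hx Hy. pose proof (HT x y Hx Hy) as H.
    replace (Rabs (x - y) * Rabs (x - y)) with ((x - y) * (x - y)) by (rewrite <- Rabs_mult, Rabs_pos_eq; [ring|apply sq_nonneg]).
    assert (E : vsub (c x) (c y) = vadd (vscale (x - y) (ce y)) (vsub (vsub (c x) (c y)) (vscale (x - y) (ce y))))
      by (apply R3_ext; unfold vsub, vadd, vscale; simpl; ring).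
    pose proof (vnorm_triangle (vscale (x - y) (ce y)) (vsub (vsub (c x) (c y)) (vscale (x - y) (ce y)))) as T1.
    pose proof (vnorm_rev_triangle (vscale (x - y) (ce y)) (vsub (vsub (c x) (c y)) (vscale (x - y) (ce y)))) as T2.
    rewrite <- E, vnorm_scale, Harc in T1, T2 by auto. apply Rabs_le. lra. }
  assert (Hiso : forall x y, a <= x <= b -> a <= y <= b -> vnorm (vsub (c (h x)) (c (h y))) = vnorm (vsub (c x) (c y))).
  { intros x y Hx Hy. destruct (Hh x Hx) as [_ E1]. destruct (Hh y Hy) as [_ E2]. rewrite <- E1, <- E2. apply HTi. }
  set (rt := theta / (K + 1)). assert (Hrt : 0 < rt) by (unfold rt; apply Rdiv_lt_0_compat; lra).
  assert (HKrt : K * rt <= theta).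
  { unfold rt. replace (K * (theta / (K + 1))) with (K / (K + 1) * theta) by (field; lra).
    pose proof (frac_le1 K HK). assert (0 <= (1 - K / (K + 1)) * theta) by (apply Rmult_le_pos; lra). lra. }
  destruct (separation rt Hrt) as [m [Hm Hsep]].
  exists (Rmin rt (m / 2)). split; [apply Rmin_glb_lt; lra|].
  intros x y Hx Hy Hxy. pose proof (Rmin_l rt (m / 2)). pose proof (Rmin_r rt (m / 2)).
  set (u := Rabs (x - y)) in *. set (u' := Rabs (h x - h y)).
  pose proof (Rabs_pos (x - y)). fold u in H1. pose proof (Rabs_pos (h x - h y)). fold u' in H2.
  destruct (Hh x Hx) as [Hhx _]. destruct (Hh y Hy) as [Hhy _].
  pose proof (HD x y Hx Hy) as D1. fold u in D1. pose proof (HD (h x) (h y) Hhx Hhy) as D2. fold u' in D2.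
  rewrite Hiso in D2 by auto.
  set (Dxy := vnorm (vsub (c x) (c y))) in *.
  assert (Ku : K * u <= theta) by (apply Rle_trans with (K * rt); [apply Rmult_le_compat_l; lra|auto]).
  assert (D1' : Dxy <= (1 + theta) * u) by (unfold Rabs in D1; destruct Rcase_abs; nra).
  assert (D1'' : (1 - theta) * u <= Dxy) by (unfold Rabs in D1; destruct Rcase_abs; nra).
  assert (Hu' : u' < rt).
  { apply Rnot_le_lt. intros Hge. pose proof (Hsep (h x) (h y) Hhx Hhy Hge). rewrite Hiso in H3 by auto. fold Dxy in H3. nra. }
  assert (Ku' : K * u' <= theta) by (apply Rle_trans with (K * rt); [apply Rmult_le_compat_l; lra|auto]).
  assert (D2' : Dxy <= (1 + theta) * u') by (unfold Rabs in D2; destruct Rcase_abs; nra).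
  assert (D2'' : (1 - theta) * u' <= Dxy) by (unfold Rabs in D2; destruct Rcase_abs; nra).
  split; lra.
Qed.

Lemma loclip_continuity (g : R -> R) K dt : 0 <= K -> 0 < dt ->
  (forall s s', Rabs (s - s') <= dt -> Rabs (g s - g s') <= K * Rabs (s - s')) -> forall x, continuity_pt g x.
Proof.
  intros HK Hdt Hg x. unfold continuity_pt, continue_in, limit1_in, limit_in. intros eps Heps.
  exists (Rmin dt (eps / (K + 1))). split. apply Rmin_glb_lt; auto. apply Rdiv_lt_0_compat; lra.
  intros y [_ Hy]. simpl in *. unfold R_dist in *.
  pose proof (Rmin_l dt (eps / (K + 1))). pose proof (Rmin_r dt (eps / (K + 1))).
  eapply Rle_lt_trans; [apply Hg; lra|].
  apply Rle_lt_trans with (K * (eps / (K + 1))). apply Rmult_le_compat_l; lra.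
  apply Rmult_lt_reg_r with (K + 1); [lra|]. field_simplify; lra.
Qed.

Lemma step2 T : isometry T -> (forall t, a <= t <= b -> exists s, a <= s <= b /\ T (c t) = c s) ->
  forall s, a <= s <= b -> exists t, a <= t <= b /\ T (c t) = c s.
Proof.
  intros HTi H1.
  assert (Hex : forall t, exists s, a <= t <= b -> a <= s <= b /\ T (c t) = c s).
  { intros t. destruct (Classical_Prop.classic (a <= t <= b)) as [Ht|Ht].
    - destruct (H1 t Ht) as [s Hs]. exists s. auto.
    - exists 0. intros; contradiction. }
  set (h := fun t => proj1_sig (constructive_indefinite_description _ (Hex t))).
  assert (Hh : forall t, a <= t <= b -> a <= h t <= b /\ T (c t) = c (h t)).
  { intros t Ht. unfold h. destruct (constructive_indefinite_description _ (Hex t)) as [s Hs]. simpl. auto. }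
  pose proof (step2_ratio T HTi h Hh) as Hratio.
  assert (Htriple : forall theta dt, 0 < theta <= 1/10 -> (forall x y, a <= x <= b -> a <= y <= b -> Rabs (x - y) <= dt ->
      (1 - theta) * Rabs (x - y) <= (1 + theta) * Rabs (h x - h y) /\ (1 - theta) * Rabs (h x - h y) <= (1 + theta) * Rabs (x - y)) ->
    forall x d, 0 < d -> 2 * d <= dt -> a <= x -> x + 2 * d <= b ->
    0 < (h (x + d) - h x) * (h (x + 2 * d) - h (x + d))).
  { intros theta dt Hth Hr x d Hd Hdd Hx Hx2.
    assert (I1 : a <= x <= b) by lra. assert (I2 : a <= x + d <= b) by lra. assert (I3 : a <= x + 2 * d <= b) by lra.
    destruct (Hr (x + d) x I2 I1 ltac:(replace (x + d - x) with d by ring; rewrite Rabs_pos_eq; lra)) as [Ra Ra'].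
    destruct (Hr (x + 2 * d) (x + d) I3 I2 ltac:(replace (x + 2 * d - (x + d)) with d by ring; rewrite Rabs_pos_eq; lra)) as [Rb Rb'].
    destruct (Hr (x + 2 * d) x I3 I1 ltac:(replace (x + 2 * d - x) with (2 * d) by ring; rewrite Rabs_pos_eq; lra)) as [Rc _].
    replace (x + d - x) with d in Ra, Ra' by ring. replace (x + 2 * d - (x + d)) with d in Rb, Rb' by ring.
    replace (x + 2 * d - x) with (2 * d) in Rc by ring. rewrite (Rabs_pos_eq d) in Ra, Ra', Rb, Rb' by lra.
    rewrite (Rabs_pos_eq (2 * d)) in Rc by lra.
    set (A := h (x + d) - h x) in *. set (B := h (x + 2 * d) - h (x + d)) in *.
    replace (h (x + 2 * d) - h x) with (A + B) in Rc by (unfold A, B; ring).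
    pose proof (Rabs_pos A). pose proof (Rabs_pos B). pose proof (Rabs_pos (A + B)).
    assert (a1 : 9 / 10 * d <= 11 / 10 * Rabs A) by nra.
    assert (a2 : 9 / 10 * Rabs A <= 11 / 10 * d) by nra.
    assert (b1 : 9 / 10 * d <= 11 / 10 * Rabs B) by nra.
    assert (b2 : 9 / 10 * Rabs B <= 11 / 10 * d) by nra.
    assert (c1 : 9 / 10 * (2 * d) <= 11 / 10 * Rabs (A + B)) by nra.
    apply Rnot_le_lt. intros Hle.
    unfold Rabs in *. destruct (Rcase_abs A); destruct (Rcase_abs B); destruct (Rcase_abs (A + B)); nra. }
  assert (Hend : forall theta, 0 < theta <= 1/10 -> (1 - theta) * (b - a) <= (1 + theta) * Rabs (h b - h a)).
  { intros theta Hth. destruct (Hratio theta Hth) as [dt [Hdt Hr]].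
    destruct (nat_unbounded (2 * (b - a) / dt + 1)) as [N HN].
    assert (HN0 : 0 < INR N) by (assert (0 <= 2 * (b - a) / dt) by (apply Rdiv_le_0_compat; lra); lra).
    set (d := (b - a) / INR N).
    assert (Hd : 0 < d) by (unfold d; apply Rdiv_lt_0_compat; lra).
    assert (Hdd : 2 * d <= dt).
    { unfold d. apply Rmult_le_reg_r with (INR N); auto.
      replace (2 * ((b - a) / INR N) * INR N) with (2 * (b - a)) by (field; lra).
      assert (2 * (b - a) / dt < INR N) by lra. apply Rmult_lt_compat_l with (r := dt) in H; auto.
      replace (dt * (2 * (b - a) / dt)) with (2 * (b - a)) in H by (field; lra). lra. }
    set (tk := fun k : nat => a + INR k * d).
    assert (HtN : tk N = b) by (unfold tk, d; field; lra).
    assert (Ht0 : tk O = a) by (unfold tk; simpl; ring).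
    assert (Htk : forall k, (k <= N)%nat -> a <= tk k <= b).
    { intros k Hk. apply le_INR in Hk. pose proof (pos_INR k). unfold tk, d. split.
      assert (0 <= INR k * ((b - a) / INR N)) by (apply Rmult_le_pos; auto; apply Rdiv_le_0_compat; lra). lra.
      apply Rle_trans with (a + INR N * ((b - a) / INR N)). apply Rplus_le_compat_l, Rmult_le_compat_r; auto.
      apply Rdiv_le_0_compat; lra. right; field; lra. }
    assert (HtS : forall k, tk (S k) = tk k + d) by (intros k; unfold tk; rewrite S_INR; ring).
    assert (Hstep : forall k, (S k <= N)%nat -> (1 - theta) * d <= (1 + theta) * Rabs (h (tk (S k)) - h (tk k))).
    { intros k Hk. assert (a <= tk (S k) <= b) by (apply Htk; auto). assert (a <= tk k <= b) by (apply Htk; lia).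
      assert (Ed : Rabs (tk (S k) - tk k) = d) by (rewrite HtS; replace (tk k + d - tk k) with d by ring; apply Rabs_pos_eq; lra).
      destruct (Hr _ _ H H0 ltac:(rewrite Ed; lra)) as [R1 _]. rewrite Ed in R1. exact R1. }
    assert (HN1 : (1 <= N)%nat).
    { destruct N; [simpl in HN0; lra|lia]. }
    set (A0 := h (tk 1%nat) - h (tk O)).
    assert (HA0 : 0 < Rabs A0).
    { pose proof (Hstep O HN1). fold A0 in H. assert (0 < (1 - theta) * d) by nra. nra. }
    assert (Hind : forall j, (S j <= N)%nat -> 0 < (h (tk (S j)) - h (tk j)) * A0 /\
        INR (S j) * ((1 - theta) * d) * Rabs A0 <= (1 + theta) * ((h (tk (S j)) - h (tk O)) * A0)).
    { induction j as [|j IH]; intros Hj.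
      - fold A0. split.
        + assert (A0 <> 0) by (intro Hz; rewrite Hz, Rabs_R0 in HA0; lra). assert (0 < A0 * A0) by (apply Rsqr_pos_lt; auto). auto.
        + pose proof (Hstep O HN1). fold A0 in H. simpl. rewrite Rmult_1_l.
          replace (A0 * A0) with (Rabs A0 * Rabs A0) by (rewrite <- Rabs_mult, Rabs_pos_eq; [ring|apply sq_nonneg]).
          pose proof (Rabs_pos A0). nra.
      - destruct (IH ltac:(lia)) as [IH1 IH2].
        set (x := tk j). pose proof (Htk j ltac:(lia)) as Hx. pose proof (Htk (S (S j)) Hj) as Hx2.
        assert (E1 : tk (S j) = x + d) by (unfold x; apply HtS).
        assert (E2 : tk (S (S j)) = x + 2 * d) by (rewrite HtS, E1; ring).
        pose proof (Htriple theta dt Hth Hr x d Hd Hdd ltac:(unfold x; lra) ltac:(rewrite <- E2; lra)) as Tr.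
        rewrite <- E1, <- E2 in Tr. fold x in IH1.
        set (D1 := h (tk (S j)) - h x) in *. set (D2 := h (tk (S (S j))) - h (tk (S j))) in *.
        assert (S1 : 0 < D2 * A0).
        { assert (0 < (D1 * D2) * (D1 * A0)) by (apply Rmult_lt_0_compat; auto).
          assert (0 < D1 * D1) by (apply Rsqr_pos_lt; intro Hz; rewrite Hz in IH1; lra).
          replace ((D1 * D2) * (D1 * A0)) with ((D1 * D1) * (D2 * A0)) in H by ring.
          apply Rnot_le_lt; intro Hle. assert ((D1 * D1) * (D2 * A0) <= 0) by (apply Rmult_le_0_r_compat_r || nra). lra. }
        split; auto.
        pose proof (Hstep (S j) Hj) as Hs. fold D2 in Hs.
        assert (E3 : D2 * A0 = Rabs D2 * Rabs A0) by (rewrite <- Rabs_mult, Rabs_pos_eq; lra).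
        replace (h (tk (S (S j))) - h (tk O)) with (D2 + (h (tk (S j)) - h (tk O))) by (unfold D2; ring).
        rewrite S_INR. pose proof (Rabs_pos A0). pose proof (Rabs_pos D2).
        assert ((1 - theta) * d * Rabs A0 <= (1 + theta) * Rabs D2 * Rabs A0) by (apply Rmult_le_compat_r; lra).
        nra. }
    destruct N as [|N']; [lia|].
    destruct (Hind N' (le_n _)) as [_ Hfin]. rewrite HtN, Ht0 in Hfin.
    replace (INR (S N') * ((1 - theta) * d)) with ((1 - theta) * (b - a)) in Hfin by (unfold d; field; lra).
    assert ((h b - h a) * A0 <= Rabs (h b - h a) * Rabs A0) by (rewrite <- Rabs_mult; apply Rle_abs).
    apply Rmult_le_reg_r with (Rabs A0); auto. nra. }
  assert (Hfull : b - a <= Rabs (h b - h a)).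
  { apply Rnot_lt_le. intros Hlt. set (L := Rabs (h b - h a)) in *. pose proof (Rabs_pos (h b - h a)). fold L in H.
    set (theta := Rmin (1/10) ((b - a - L) / (4 * (b - a)))).
    assert (Hth : 0 < theta <= 1/10) by (unfold theta; split; [apply Rmin_glb_lt; [lra|apply Rdiv_lt_0_compat; lra]|apply Rmin_l]).
    assert (Hth2 : theta * (4 * (b - a)) <= b - a - L).
    { apply Rle_trans with ((b - a - L) / (4 * (b - a)) * (4 * (b - a))). apply Rmult_le_compat_r; [lra|apply Rmin_r].
      right; field; lra. }
    pose proof (Hend theta Hth). nra. }
  destruct (Hh a ltac:(lra)) as [Ha _]. destruct (Hh b ltac:(lra)) as [Hb _].
  destruct (Hratio (1/10) ltac:(lra)) as [dt [Hdt Hr]].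
  set (ht := fun t => h (clamp a b t)).
  assert (Hcont : forall x, continuity_pt ht x).
  { apply (loclip_continuity ht (11/9) dt); [lra|auto|].
    intros u w Huw. unfold ht. pose proof (clamp_lip a b u w). pose proof (clamp_in a b u Hab'). pose proof (clamp_in a b w Hab').
    destruct (Hr (clamp a b u) (clamp a b w) H0 H2 ltac:(lra)) as [_ R2]. pose proof (Rabs_pos (h (clamp a b u) - h (clamp a b w))). lra. }
  intros s Hs.
  destruct (IVT_cor (fun t => ht t - s) a b) as [z [Hz Hz0]].
  - intros x. apply continuity_pt_minus; auto. apply continuity_pt_const. intros ??; auto.
  - lra.
  - unfold ht. rewrite !clamp_id by lra.
    unfold Rabs in Hfull. destruct Rcase_abs in Hfull.
    + assert (h b = a) by lra. assert (h a = b) by lra. rewrite H, H0. nra.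
    + assert (h b = b) by lra. assert (h a = a) by lra. rewrite H, H0. nra.
  - exists z. split; auto. destruct (Hh z Hz) as [_ E]. rewrite E. unfold ht in Hz0. rewrite clamp_id in Hz0 by auto.
    f_equal. lra.
Qed.

Lemma strip_zero al be t : strip c ce cdd al be t 0 = c t.
Proof. unfold strip. apply R3_ext; unfold vadd, vscale; simpl; ring. Qed.

Lemma far_bound A B X Y w w' : vnorm X = 1 -> vnorm Y = 1 ->
  vnorm (vsub A B) - Rabs w - Rabs w' <= vnorm (vsub (vadd A (vscale w X)) (vadd B (vscale w' Y))).
Proof.
  intros HX HY.
  replace (vsub (vadd A (vscale w X)) (vadd B (vscale w' Y))) with (vadd (vsub A B) (vadd (vscale w X) (vscale (- w') Y)))
    by (apply R3_ext; unfold vsub, vadd, vscale; simpl; ring).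
  pose proof (vnorm_rev_triangle (vsub A B) (vadd (vscale w X) (vscale (- w') Y))).
  pose proof (vnorm_triangle (vscale w X) (vscale (- w') Y)). rewrite !vnorm_scale, HX, HY, Rabs_Ropp in H0. lra.
Qed.

Section Main.
Variables (alpha alpha_d beta betac : R -> R).
Hypothesis Halpha_smooth : smooth alpha.
Hypothesis Halpha_d : forall t, derivable_pt_lim alpha t (alpha_d t).
Hypothesis Halpha : forall t, a <= t <= b -> 0 < Rabs (alpha t) < PI / 2.
Hypothesis Hbeta : developable_angle a b ce cdd nd alpha alpha_d beta.
Hypothesis Hbetac : developable_angle a b ce cdd nd (negf alpha) (negf alpha_d) betac.

Let HLa : LB a b alpha. Proof. exact (proj1 (tower2 a b alpha alpha_d Hab' Halpha_smooth Halpha_d)). Qed.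
Let HLad : LB a b alpha_d. Proof. exact (proj2 (tower2 a b alpha alpha_d Hab' Halpha_smooth Halpha_d)). Qed.
Let Hd2 : forall t, derivable_pt_lim (negf alpha) t (negf alpha_d t).
Proof. intros t. apply (derivable_pt_lim_opp alpha). auto. Qed.
Let HLa2 : LB a b (negf alpha). Proof. apply LB_opp; auto. Qed.
Let HLad2 : LB a b (negf alpha_d). Proof. apply LB_opp; auto. Qed.
Let Hal2 : forall t, a <= t <= b -> 0 < Rabs (negf alpha t) < PI / 2.
Proof. intros t Ht. unfold negf. rewrite Rabs_Ropp. auto. Qed.

Notation F1 := (strip c ce cdd alpha beta).
Notation F2 := (strip c ce cdd (negf alpha) betac).
Notation xi1 := (ruling ce cdd alpha beta).
Notation xi2 := (ruling ce cdd (negf alpha) betac).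

Lemma xi1_unit t : a <= t <= b -> vnorm (xi1 t) = 1.
Proof. intros Ht. apply vnorm_unit. apply (xi_dots alpha alpha_d beta Halpha_d HLa HLad Halpha Hbeta t Ht). Qed.
Lemma xi2_unit t : a <= t <= b -> vnorm (xi2 t) = 1.
Proof. intros Ht. apply vnorm_unit. apply (xi_dots (negf alpha) (negf alpha_d) betac Hd2 HLa2 HLad2 Hal2 Hbetac t Ht). Qed.

Lemma both_angles : exists sg, 0 < sg /\ sg <= 1 /\ forall t, a <= t <= b ->
  sg <= sin (beta t) /\ sg <= sin (betac t) /\ sg <= cos (alpha t) /\ sg <= sin (alpha t) * sin (alpha t).
Proof.
  destruct (sheet_angles alpha alpha_d beta Halpha_d HLa HLad Halpha Hbeta) as [s1 [H1 [H1' [A1 [B1 [C1 _]]]]]].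
  destruct (sheet_angles (negf alpha) (negf alpha_d) betac Hd2 HLa2 HLad2 Hal2 Hbetac) as [s2 [H2 [H2' [A2 _]]]].
  exists (Rmin s1 s2). split; [apply Rmin_glb_lt; auto|]. split; [pose proof (Rmin_l s1 s2); lra|].
  intros t Ht. pose proof (Rmin_l s1 s2). pose proof (Rmin_r s1 s2).
  specialize (A1 t Ht). specialize (A2 t Ht). specialize (B1 t Ht). specialize (C1 t Ht). repeat split; lra.
Qed.

Lemma abs_sin_ge t sg : sg <= sin (alpha t) * sin (alpha t) -> sg <= Rabs (sin (alpha t)).
Proof.
  intros H. pose proof (SIN_bound (alpha t)). assert (Rabs (sin (alpha t)) <= 1) by (apply Rabs_le; lra).
  assert (sin (alpha t) * sin (alpha t) = Rabs (sin (alpha t)) * Rabs (sin (alpha t))) by (rewrite <- Rabs_mult, Rabs_pos_eq; [ring|apply sq_nonneg]).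
  pose proof (Rabs_pos (sin (alpha t))). nra.
Qed.

Lemma cross_main s' x w w' sg : a <= s' <= b -> 0 < sg <= 1 ->
  sg <= sin (beta s') -> sg <= sin (betac s') -> sg <= cos (alpha s') -> sg <= sin (alpha s') * sin (alpha s') ->
  sg * sg / 5 * (Rabs x + Rabs w + Rabs w') <= vnorm (vadd (vscale x (ce s')) (vsub (vscale w (xi2 s')) (vscale w' (xi1 s')))).
Proof.
  intros Hs' Hsg Hb1 Hb2 Hca Hsa.
  set (M := vadd (vscale x (ce s')) (vsub (vscale w (xi2 s')) (vscale w' (xi1 s')))).
  destruct (xi_dots alpha alpha_d beta Halpha_d HLa HLad Halpha Hbeta s' Hs') as [_ [E1 [N1 [B1 _]]]].
  destruct (xi_dots (negf alpha) (negf alpha_d) betac Hd2 HLa2 HLad2 Hal2 Hbetac s' Hs') as [_ [E2 [N2 [B2 _]]]].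
  assert (CN : cos (negf alpha s') = cos (alpha s')) by (unfold negf; apply cos_neg).
  assert (SN : sin (negf alpha s') = - sin (alpha s')) by (unfold negf; apply sin_neg).
  rewrite CN in N2. rewrite SN in B2.
  destruct (frame_dots s' Hs') as [D1 [D2 [D3 [D4 [D5 [D6 [D7 [D8 D9]]]]]]]].
  assert (Me : dot M (ce s') = x + w * cos (betac s') - w' * cos (beta s')).
  { unfold M. dot_expand. rewrite D1, (dot_comm (xi2 s')), (dot_comm (xi1 s')), E1, E2. ring. }
  assert (Mn : dot M (normal cdd s') = cos (alpha s') * (w * sin (betac s') - w' * sin (beta s'))).
  { unfold M. dot_expand. rewrite D4, (dot_comm (xi2 s')), (dot_comm (xi1 s')), N1, N2. ring. }
  assert (Mb : dot M (binormal ce cdd s') = - sin (alpha s') * (w * sin (betac s') + w' * sin (beta s'))).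
  { unfold M. dot_expand. rewrite D6, (dot_comm (xi2 s')), (dot_comm (xi1 s')), B1, B2. ring. }
  pose proof (abs_dot_unit M _ D1) as Be. rewrite Me in Be.
  pose proof (abs_dot_unit M _ D2) as Bn. rewrite Mn, Rabs_mult, (Rabs_pos_eq (cos (alpha s'))) in Bn by lra.
  pose proof (abs_dot_unit M _ D3) as Bb. rewrite Mb, Rabs_mult, Rabs_Ropp in Bb.
  pose proof (abs_sin_ge s' sg Hsa) as Hsa'.
  set (N := vnorm M) in *. set (P := w * sin (betac s')). set (Q := w' * sin (beta s')). fold P Q in Bn, Bb.
  pose proof (Rabs_pos (P - Q)). pose proof (Rabs_pos (P + Q)).
  assert (H1 : sg * Rabs (P - Q) <= N) by (apply Rle_trans with (cos (alpha s') * Rabs (P - Q)); [apply Rmult_le_compat_r|]; lra).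
  assert (H2 : sg * Rabs (P + Q) <= N) by (apply Rle_trans with (Rabs (sin (alpha s')) * Rabs (P + Q)); [apply Rmult_le_compat_r|]; lra).
  assert (HP : sg * Rabs P <= N).
  { assert (2 * Rabs P <= Rabs (P - Q) + Rabs (P + Q)).
    { replace (2 * Rabs P) with (Rabs (2 * P)) by (rewrite Rabs_mult, Rabs_pos_eq; lra).
      replace (2 * P) with ((P + Q) + (P - Q)) by ring. rewrite Rplus_comm. apply Rabs_triang. }
    nra. }
  assert (HQ : sg * Rabs Q <= N).
  { assert (2 * Rabs Q <= Rabs (P - Q) + Rabs (P + Q)).
    { replace (2 * Rabs Q) with (Rabs (2 * Q)) by (rewrite Rabs_mult, Rabs_pos_eq; lra).
      replace (2 * Q) with ((P + Q) - (P - Q)) by ring. unfold Rminus at 1. eapply Rle_trans; [apply Rabs_triang|].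
      rewrite Rabs_Ropp. lra. }
    nra. }
  assert (Hw : sg * sg * Rabs w <= N).
  { unfold P in HP. rewrite Rabs_mult, (Rabs_pos_eq (sin (betac s'))) in HP by lra.
    pose proof (Rabs_pos w). assert (sg * Rabs w <= sin (betac s') * Rabs w) by (apply Rmult_le_compat_r; lra). nra. }
  assert (Hw' : sg * sg * Rabs w' <= N).
  { unfold Q in HQ. rewrite Rabs_mult, (Rabs_pos_eq (sin (beta s'))) in HQ by lra.
    pose proof (Rabs_pos w'). assert (sg * Rabs w' <= sin (beta s') * Rabs w') by (apply Rmult_le_compat_r; lra). nra. }
  assert (Hx : Rabs x <= N + Rabs w + Rabs w').
  { pose proof (COS_bound (beta s')). pose proof (COS_bound (betac s')).
    assert (Rabs (w * cos (betac s')) <= Rabs w) by (rewrite Rabs_mult; pose proof (Rabs_pos w); assert (Rabs (cos (betac s')) <= 1) by (apply Rabs_le; lra); nra).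
    assert (Rabs (w' * cos (beta s')) <= Rabs w') by (rewrite Rabs_mult; pose proof (Rabs_pos w'); assert (Rabs (cos (beta s')) <= 1) by (apply Rabs_le; lra); nra).
    replace x with ((x + w * cos (betac s') - w' * cos (beta s')) - w * cos (betac s') + w' * cos (beta s')) at 1 by ring.
    eapply Rle_trans; [apply Rabs_triang|]. unfold Rminus. eapply Rle_trans; [apply Rplus_le_compat_r; apply Rabs_triang|].
    rewrite Rabs_Ropp. unfold Rminus in Be. lra. }
  assert (sg * sg <= 1) by nra. pose proof (Rabs_pos x).
  assert (sg * sg * Rabs x <= sg * sg * (N + Rabs w + Rabs w')) by (apply Rmult_le_compat_l; nra).
  assert (0 <= N) by apply vnorm_ge0. nra.
Qed.

Lemma cross_bound : exists rho eps1 k0, 0 < rho /\ 0 < eps1 /\ 0 < k0 /\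
  forall s s' w w', a <= s <= b -> a <= s' <= b -> Rabs (s - s') <= rho -> Rabs w <= eps1 ->
  k0 * (Rabs (s - s') + Rabs w + Rabs w') <= vnorm (vsub (F2 s w) (F1 s' w')).
Proof.
  destruct both_angles as [sg [Hsg [Hsg1 HA]]].
  destruct (LBv_lip a b _ (xi_LB (negf alpha) (negf alpha_d) betac Hd2 HLa2 HLad2 Hal2 Hbetac)) as [Kx [HKx Lx]].
  destruct taylor_c as [K [HK HT]].
  set (q := sg * sg).
  assert (Hq : 0 < q) by (unfold q; nra).
  exists (q / (20 * (K + 1))), (q / (20 * (Kx + 1))), (q / 10).
  repeat split; try (apply Rdiv_lt_0_compat; lra).
  intros s s' w w' Hs Hs' Hss Hw.
  destruct (HA s' Hs') as [A1 [A2 [A3 A4]]].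
  pose proof (cross_main s' (s - s') w w' sg Hs' (conj Hsg Hsg1) A1 A2 A3 A4) as HM. fold q in HM.
  replace (vsub (F2 s w) (F1 s' w')) with
    (vadd (vadd (vadd (vscale (s - s') (ce s')) (vsub (vscale w (xi2 s')) (vscale w' (xi1 s'))))
      (vsub (vsub (c s) (c s')) (vscale (s - s') (ce s')))) (vscale w (vsub (xi2 s) (xi2 s'))))
    by (apply R3_ext; unfold strip, vadd, vsub, vscale; simpl; ring).
  pose proof (HT s s' Hs Hs') as HR. pose proof (Lx s s' Hs Hs') as HX.
  pose proof (vnorm_rev_triangle (vadd (vadd (vscale (s - s') (ce s')) (vsub (vscale w (xi2 s')) (vscale w' (xi1 s'))))
      (vsub (vsub (c s) (c s')) (vscale (s - s') (ce s')))) (vscale w (vsub (xi2 s) (xi2 s')))) as T1.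
  pose proof (vnorm_rev_triangle (vadd (vscale (s - s') (ce s')) (vsub (vscale w (xi2 s')) (vscale w' (xi1 s'))))
      (vsub (vsub (c s) (c s')) (vscale (s - s') (ce s')))) as T2.
  rewrite vnorm_scale in T1.
  set (D := Rabs (s - s')) in *.
  assert (HD2 : (s - s') * (s - s') = D * D) by (unfold D; rewrite <- Rabs_mult, Rabs_pos_eq; [ring|apply sq_nonneg]).
  rewrite HD2 in HR.
  pose proof (Rabs_pos (s - s')). fold D in H. pose proof (Rabs_pos w). pose proof (Rabs_pos w').
  assert (E1 : K * (D * D) <= q / 20 * D).
  { apply Rle_trans with (K * (q / (20 * (K + 1))) * D).
    replace (K * (D * D)) with (K * D * D) by ring. apply Rmult_le_compat_r; auto. apply Rmult_le_compat_l; auto.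
    replace (K * (q / (20 * (K + 1))) * D) with (K / (K + 1) * (q / 20) * D) by (field; lra).
    apply Rmult_le_compat_r; auto. assert (K / (K + 1) <= 1) by (apply frac_le1; lra).
    assert (0 <= (1 - K / (K + 1)) * (q / 20)) by (apply Rmult_le_pos; lra). lra. }
  assert (E2 : Rabs w * vnorm (vsub (xi2 s) (xi2 s')) <= q / 20 * D).
  { apply Rle_trans with (q / (20 * (Kx + 1)) * (Kx * D)). apply Rmult_le_compat; auto using vnorm_ge0.
    replace (q / (20 * (Kx + 1)) * (Kx * D)) with (Kx / (Kx + 1) * (q / 20) * D) by (field; lra).
    apply Rmult_le_compat_r; auto. assert (Kx / (Kx + 1) <= 1) by (apply frac_le1; lra).
    assert (0 <= (1 - Kx / (Kx + 1)) * (q / 20)) by (apply Rmult_le_pos; lra). lra. }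
  assert (0 <= q * D) by (apply Rmult_le_pos; lra). assert (0 <= q * Rabs w) by (apply Rmult_le_pos; lra).
  assert (0 <= q * Rabs w') by (apply Rmult_le_pos; lra). lra.
Qed.

Lemma KL : exists rho eps1 k0 mr, 0 < rho /\ 0 < eps1 /\ 0 < k0 /\ 0 < mr /\ 4 * eps1 <= mr /\
  (forall s s' w w', a <= s <= b -> a <= s' <= b -> Rabs (s - s') <= rho -> Rabs w <= eps1 ->
     k0 * (Rabs (s - s') + Rabs (w - w')) <= vnorm (vsub (F1 s w) (F1 s' w'))) /\
  (forall s s' w w', a <= s <= b -> a <= s' <= b -> Rabs (s - s') <= rho -> Rabs w <= eps1 ->
     k0 * (Rabs (s - s') + Rabs (w - w')) <= vnorm (vsub (F2 s w) (F2 s' w'))) /\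
  (forall s s' w w', a <= s <= b -> a <= s' <= b -> Rabs (s - s') <= rho -> Rabs w <= eps1 ->
     k0 * (Rabs (s - s') + Rabs w + Rabs w') <= vnorm (vsub (F2 s w) (F1 s' w'))) /\
  (forall s s', a <= s <= b -> a <= s' <= b -> rho < Rabs (s - s') -> mr <= vnorm (vsub (c s) (c s'))).
Proof.
  destruct (same_sheet_bound alpha alpha_d beta Halpha_d HLa HLad Halpha Hbeta) as [r1 [e1 [k1 [Hr1 [He1 [Hk1 S1]]]]]].
  destruct (same_sheet_bound (negf alpha) (negf alpha_d) betac Hd2 HLa2 HLad2 Hal2 Hbetac) as [r2 [e2 [k2 [Hr2 [He2 [Hk2 S2]]]]]].
  destruct cross_bound as [r3 [e3 [k3 [Hr3 [He3 [Hk3 S3]]]]]].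
  set (rho := Rmin r1 (Rmin r2 r3)).
  assert (Hrho : 0 < rho) by (unfold rho; repeat apply Rmin_glb_lt; auto).
  assert (R1 : rho <= r1) by apply Rmin_l.
  assert (R2 : rho <= r2) by (eapply Rle_trans; [apply Rmin_r|apply Rmin_l]).
  assert (R3 : rho <= r3) by (eapply Rle_trans; [apply Rmin_r|apply Rmin_r]).
  destruct (separation rho Hrho) as [mr [Hmr Hsep]].
  set (eps1 := Rmin (Rmin e1 e2) (Rmin e3 (mr / 4))).
  assert (He : 0 < eps1) by (unfold eps1; repeat apply Rmin_glb_lt; lra).
  assert (E1 : eps1 <= e1) by (unfold eps1; eapply Rle_trans; [apply Rmin_l|apply Rmin_l]).
  assert (E2 : eps1 <= e2) by (unfold eps1; eapply Rle_trans; [apply Rmin_l|apply Rmin_r]).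
  assert (E3 : eps1 <= e3) by (unfold eps1; eapply Rle_trans; [apply Rmin_r|apply Rmin_l]).
  assert (E4 : eps1 <= mr / 4) by (unfold eps1; eapply Rle_trans; [apply Rmin_r|apply Rmin_r]).
  set (k0 := Rmin k1 (Rmin k2 k3)).
  assert (Hk : 0 < k0) by (unfold k0; repeat apply Rmin_glb_lt; auto).
  assert (K1 : k0 <= k1) by apply Rmin_l.
  assert (K2 : k0 <= k2) by (eapply Rle_trans; [apply Rmin_r|apply Rmin_l]).
  assert (K3 : k0 <= k3) by (eapply Rle_trans; [apply Rmin_r|apply Rmin_r]).
  exists rho, eps1, k0, mr. repeat split; auto; try lra.
  - intros s s' w w' Hs Hs' Hss Hw. eapply Rle_trans; [|apply S1; auto; lra].
    apply Rmult_le_compat_r; auto. pose proof (Rabs_pos (s - s')); pose proof (Rabs_pos (w - w')); lra.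
  - intros s s' w w' Hs Hs' Hss Hw. eapply Rle_trans; [|apply S2; auto; lra].
    apply Rmult_le_compat_r; auto. pose proof (Rabs_pos (s - s')); pose proof (Rabs_pos (w - w')); lra.
  - intros s s' w w' Hs Hs' Hss Hw. eapply Rle_trans; [|apply S3; auto; lra].
    apply Rmult_le_compat_r; auto. pose proof (Rabs_pos (s - s')); pose proof (Rabs_pos w); pose proof (Rabs_pos w'); lra.
  - intros s s' Hs Hs' Hss. apply Hsep; auto. lra.
Qed.

Definition KLP rho eps1 k0 mr := 0 < rho /\ 0 < eps1 /\ 0 < k0 /\ 0 < mr /\ 4 * eps1 <= mr /\
  (forall s s' w w', a <= s <= b -> a <= s' <= b -> Rabs (s - s') <= rho -> Rabs w <= eps1 ->
     k0 * (Rabs (s - s') + Rabs (w - w')) <= vnorm (vsub (F1 s w) (F1 s' w'))) /\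
  (forall s s' w w', a <= s <= b -> a <= s' <= b -> Rabs (s - s') <= rho -> Rabs w <= eps1 ->
     k0 * (Rabs (s - s') + Rabs (w - w')) <= vnorm (vsub (F2 s w) (F2 s' w'))) /\
  (forall s s' w w', a <= s <= b -> a <= s' <= b -> Rabs (s - s') <= rho -> Rabs w <= eps1 ->
     k0 * (Rabs (s - s') + Rabs w + Rabs w') <= vnorm (vsub (F2 s w) (F1 s' w'))) /\
  (forall s s', a <= s <= b -> a <= s' <= b -> rho < Rabs (s - s') -> mr <= vnorm (vsub (c s) (c s'))).

Lemma KLP_exists : exists rho eps1 k0 mr, KLP rho eps1 k0 mr.
Proof. destruct KL as [r [e [k [m H]]]]. exists r, e, k, m. exact H. Qed.

Lemma far_any X Y s s' w w' mr eps1 : vnorm X = 1 -> vnorm Y = 1 -> mr <= vnorm (vsub (c s) (c s')) ->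
  4 * eps1 <= mr -> Rabs w <= eps1 -> Rabs w' <= eps1 ->
  mr / 2 <= vnorm (vsub (vadd (c s) (vscale w X)) (vadd (c s') (vscale w' Y))).
Proof. intros HX HY Hm H4 Hw Hw'. pose proof (far_bound (c s) (c s') X Y w w' HX HY). lra. Qed.

Lemma flat2 rho eps1 k0 mr : KLP rho eps1 k0 mr -> forall eps, 0 < eps <= eps1 ->
  forall s0 w0, a <= s0 <= b -> 0 < w0 < eps -> forall eta, 0 < eta -> exists r, 0 < r /\
  forall p, psi_img a b c ce cdd alpha beta betac eps p -> vnorm (vsub p (F2 s0 w0)) < r ->
  Rabs (dot (mvec ce cdd (negf alpha) s0) (vsub p (F2 s0 w0))) <= eta * vnorm (vsub p (F2 s0 w0)).
Proof.
  intros [Hrho [He1 [Hk0 [Hmr [H4 [KS1 [KS2 [KC KF]]]]]]]] eps Heps s0 w0 Hs0 Hw0 eta Heta.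
  destruct (flat_core (negf alpha) (negf alpha_d) betac Hd2 HLa2 HLad2 Hal2 Hbetac k0 eps1 s0 w0 eta Hk0 ltac:(lra) Hs0 Heta) as [r0 [Hr0 Hcore]].
  exists (Rmin r0 (Rmin (mr / 2) (k0 * w0))). split.
  { repeat apply Rmin_glb_lt; try lra. nra. }
  intros p [t [v [Ht Hp]]] Hpr.
  assert (P1 : vnorm (vsub p (F2 s0 w0)) < r0) by (eapply Rlt_le_trans; [exact Hpr|apply Rmin_l]).
  assert (P2 : vnorm (vsub p (F2 s0 w0)) < mr / 2) by (eapply Rlt_le_trans; [exact Hpr|]; eapply Rle_trans; [apply Rmin_r|apply Rmin_l]).
  assert (P3 : vnorm (vsub p (F2 s0 w0)) < k0 * w0) by (eapply Rlt_le_trans; [exact Hpr|]; eapply Rle_trans; [apply Rmin_r|apply Rmin_r]).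
  assert (Hw0a : Rabs w0 <= eps1) by (rewrite Rabs_pos_eq; lra).
  destruct (Rle_lt_dec (Rabs (t - s0)) rho) as [Hnear|Hfar].
  2:{ exfalso. pose proof (KF t s0 Ht Hs0 Hfar).
      destruct Hp as [[Hv Hp]|[Hv Hp]]; subst p.
      - assert (Rabs v <= eps1) by (rewrite Rabs_pos_eq; lra).
        pose proof (far_any _ _ t s0 v w0 mr eps1 (xi2_unit t Ht) (xi2_unit s0 Hs0) H H4 H0 Hw0a). unfold strip in P2. lra.
      - assert (Rabs v <= eps1) by (rewrite Rabs_left; lra).
        pose proof (far_any _ _ t s0 v w0 mr eps1 (xi1_unit t Ht) (xi2_unit s0 Hs0) H H4 H0 Hw0a). unfold strip in P2. lra. }
  destruct Hp as [[Hv Hp]|[Hv Hp]]; subst p.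
  - assert (Hva : Rabs v <= eps1) by (rewrite Rabs_pos_eq; lra).
    pose proof (KS2 t s0 v w0 Ht Hs0 Hnear Hva) as HK. pose proof (Rabs_pos (v - w0)).
    apply Hcore; auto. assert (0 <= k0 * Rabs (v - w0)) by (apply Rmult_le_pos; lra). lra.
  - exfalso. pose proof (KC s0 t w0 v Hs0 Ht ltac:(rewrite Rabs_minus_sym; lra) Hw0a) as HK.
    rewrite vnorm_sub_sym in HK. rewrite (Rabs_pos_eq w0) in HK by lra.
    pose proof (Rabs_pos (s0 - t)). pose proof (Rabs_pos v).
    assert (0 <= k0 * (Rabs (s0 - t) + Rabs v)) by (apply Rmult_le_pos; lra). nra.
Qed.

Lemma flat1 rho eps1 k0 mr : KLP rho eps1 k0 mr -> forall eps, 0 < eps <= eps1 ->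
  forall s0 w0, a <= s0 <= b -> - eps < w0 < 0 -> forall eta, 0 < eta -> exists r, 0 < r /\
  forall p, psi_img a b c ce cdd alpha beta betac eps p -> vnorm (vsub p (F1 s0 w0)) < r ->
  Rabs (dot (mvec ce cdd alpha s0) (vsub p (F1 s0 w0))) <= eta * vnorm (vsub p (F1 s0 w0)).
Proof.
  intros [Hrho [He1 [Hk0 [Hmr [H4 [KS1 [KS2 [KC KF]]]]]]]] eps Heps s0 w0 Hs0 Hw0 eta Heta.
  destruct (flat_core alpha alpha_d beta Halpha_d HLa HLad Halpha Hbeta k0 eps1 s0 w0 eta Hk0 ltac:(lra) Hs0 Heta) as [r0 [Hr0 Hcore]].
  exists (Rmin r0 (Rmin (mr / 2) (k0 * (- w0)))). split.
  { repeat apply Rmin_glb_lt; try lra. nra. }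
  intros p [t [v [Ht Hp]]] Hpr.
  assert (P1 : vnorm (vsub p (F1 s0 w0)) < r0) by (eapply Rlt_le_trans; [exact Hpr|apply Rmin_l]).
  assert (P2 : vnorm (vsub p (F1 s0 w0)) < mr / 2) by (eapply Rlt_le_trans; [exact Hpr|]; eapply Rle_trans; [apply Rmin_r|apply Rmin_l]).
  assert (P3 : vnorm (vsub p (F1 s0 w0)) < k0 * (- w0)) by (eapply Rlt_le_trans; [exact Hpr|]; eapply Rle_trans; [apply Rmin_r|apply Rmin_r]).
  assert (Hw0a : Rabs w0 <= eps1) by (rewrite Rabs_left; lra).
  destruct (Rle_lt_dec (Rabs (t - s0)) rho) as [Hnear|Hfar].
  2:{ exfalso. pose proof (KF t s0 Ht Hs0 Hfar).
      destruct Hp as [[Hv Hp]|[Hv Hp]]; subst p.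
      - assert (Rabs v <= eps1) by (rewrite Rabs_pos_eq; lra).
        pose proof (far_any _ _ t s0 v w0 mr eps1 (xi2_unit t Ht) (xi1_unit s0 Hs0) H H4 H0 Hw0a). unfold strip in P2. lra.
      - assert (Rabs v <= eps1) by (rewrite Rabs_left; lra).
        pose proof (far_any _ _ t s0 v w0 mr eps1 (xi1_unit t Ht) (xi1_unit s0 Hs0) H H4 H0 Hw0a). unfold strip in P2. lra. }
  destruct Hp as [[Hv Hp]|[Hv Hp]]; subst p.
  - exfalso. assert (Hva : Rabs v <= eps1) by (rewrite Rabs_pos_eq; lra).
    pose proof (KC t s0 v w0 Ht Hs0 Hnear Hva) as HK. rewrite (Rabs_left w0) in HK by lra.
    pose proof (Rabs_pos (t - s0)). pose proof (Rabs_pos v).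
    assert (0 <= k0 * (Rabs (t - s0) + Rabs v)) by (apply Rmult_le_pos; lra). nra.
  - assert (Hva : Rabs v <= eps1) by (rewrite Rabs_left; lra).
    pose proof (KS1 t s0 v w0 Ht Hs0 Hnear Hva) as HK. pose proof (Rabs_pos (v - w0)).
    apply Hcore; auto. assert (0 <= k0 * Rabs (v - w0)) by (apply Rmult_le_pos; lra). lra.
Qed.

Lemma rich (U : R3 -> R3) (HUd : forall x y, dot (U x) (U y) = dot x y)
  (HUs : forall k x, U (vscale k x) = vscale k (U x)) (HUa : forall x y, U (vadd x y) = vadd (U x) (U y))
  delta t m : 0 < delta -> a <= t <= b -> dot m m = 1 ->
  (forall eta, 0 < eta -> exists r, 0 < r /\ forall p, phi_img a b c ce cdd alpha beta betac delta p ->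
     vnorm (vsub p (c t)) < r -> Rabs (dot m (U (vsub p (c t)))) <= eta * vnorm (vsub p (c t))) -> False.
Proof.
  intros Hdelta Ht Hm Hflat.
  assert (HUn : forall x, vnorm (U x) = vnorm x) by (intros x; unfold vnorm; rewrite HUd; auto).
  destruct both_angles as [sg [Hsg [Hsg1 HA]]]. destruct (HA t Ht) as [A1 [A2 [A3 A4]]].
  set (eta := sg * sg / 10). assert (Heta : 0 < eta) by (unfold eta; nra).
  destruct (Hflat eta Heta) as [r [Hr Hfl]].
  destruct taylor_c as [K [HK HT]].
  set (X := dot m (U (ce t))). set (Y := dot m (U (normal cdd t))). set (Z := dot m (U (binormal ce cdd t))).
  set (v := Rmin delta r / 2).
  assert (Hv : 0 < v) by (unfold v; apply Rdiv_lt_0_compat; [apply Rmin_glb_lt|]; lra).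
  assert (Hvd : v < delta) by (unfold v; pose proof (Rmin_l delta r); lra).
  assert (Hvr : v < r) by (unfold v; pose proof (Rmin_r delta r); lra).
  assert (B1 : Rabs (dot m (U (xi1 t))) <= eta).
  { assert (Hp : phi_img a b c ce cdd alpha beta betac delta (F1 t v)) by (exists t, v; split; auto; left; split; [lra|auto]).
    assert (E : vsub (F1 t v) (c t) = vscale v (xi1 t)) by (apply R3_ext; unfold strip, vsub, vadd, vscale; simpl; ring).
    pose proof (Hfl _ Hp). rewrite E, vnorm_scale, xi1_unit, HUs, dot_scaler, Rabs_mult, (Rabs_pos_eq v) in H by lra.
    assert (v * Rabs (dot m (U (xi1 t))) <= v * eta) by (rewrite Rmult_1_r in H; rewrite (Rmult_comm v eta); apply H; lra).
    apply Rmult_le_reg_l with v; lra. }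
  assert (B2 : Rabs (dot m (U (xi2 t))) <= eta).
  { assert (Hp : phi_img a b c ce cdd alpha beta betac delta (F2 t (- v))) by (exists t, (- v); split; auto; right; split; [lra|auto]).
    assert (E : vsub (F2 t (- v)) (c t) = vscale (- v) (xi2 t)) by (apply R3_ext; unfold strip, vsub, vadd, vscale; simpl; ring).
    pose proof (Hfl _ Hp). rewrite E, vnorm_scale, xi2_unit, HUs, dot_scaler, Rabs_mult, Rabs_Ropp, (Rabs_pos_eq v) in H by lra.
    assert (v * Rabs (dot m (U (xi2 t))) <= v * eta) by (rewrite Rmult_1_r in H; rewrite (Rmult_comm v eta); apply H; lra).
    apply Rmult_le_reg_l with v; lra. }
  assert (BX : Rabs X <= 2 * eta).
  { set (h := Rmin (Rmin ((b - a) / 2) 1) (Rmin (r / (2 * (K + 1))) (eta / ((eta + 1) * (K + 1))))).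
    assert (Hh : 0 < h) by (unfold h; repeat apply Rmin_glb_lt; try lra; apply Rdiv_lt_0_compat; try lra; nra).
    assert (Hh1 : h <= (b - a) / 2) by (unfold h; eapply Rle_trans; [apply Rmin_l|apply Rmin_l]).
    assert (Hh2 : h <= 1) by (unfold h; eapply Rle_trans; [apply Rmin_l|apply Rmin_r]).
    assert (Hh3 : h <= r / (2 * (K + 1))) by (unfold h; eapply Rle_trans; [apply Rmin_r|apply Rmin_l]).
    assert (Hh4 : h <= eta / ((eta + 1) * (K + 1))) by (unfold h; eapply Rle_trans; [apply Rmin_r|apply Rmin_r]).
    assert (Ht' : exists t', a <= t' <= b /\ Rabs (t' - t) = h).
    { destruct (Rle_dec (t + h) b).
      - exists (t + h). split; [lra|]. replace (t + h - t) with h by ring. apply Rabs_pos_eq; lra.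
      - exists (t - h). split; [lra|]. replace (t - h - t) with (- h) by ring. rewrite Rabs_Ropp. apply Rabs_pos_eq; lra. }
    destruct Ht' as [t' [Ht' Hth]].
    set (R := vsub (vsub (c t') (c t)) (vscale (t' - t) (ce t))).
    pose proof (HT t' t Ht' Ht) as HR. fold R in HR.
    assert (HD2 : (t' - t) * (t' - t) = h * h) by (rewrite <- Hth, <- Rabs_mult, Rabs_pos_eq; [ring|apply sq_nonneg]).
    rewrite HD2 in HR.
    assert (E : vsub (c t') (c t) = vadd (vscale (t' - t) (ce t)) R) by (unfold R; apply R3_ext; unfold vsub, vadd, vscale; simpl; ring).
    assert (Hn : vnorm (vsub (c t') (c t)) <= h + K * (h * h)).
    { rewrite E. eapply Rle_trans; [apply vnorm_triangle|]. rewrite vnorm_scale, Harc, Hth by auto. lra. }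
    assert (HKh : K * (h * h) <= K * h) by (apply Rmult_le_compat_l; auto; nra).
    assert (Kh2 : (K + 1) * h <= r / 2).
    { apply Rle_trans with ((K + 1) * (r / (2 * (K + 1)))). apply Rmult_le_compat_l; lra. right; field; lra. }
    assert (Hnr : vnorm (vsub (c t') (c t)) < r) by nra.
    assert (Hp : phi_img a b c ce cdd alpha beta betac delta (c t')).
    { exists t', 0. split; auto. left. split; [lra|]. rewrite strip_zero; auto. }
    pose proof (Hfl _ Hp Hnr) as Hb. rewrite E, HUa, HUs, dot_addr, dot_scaler in Hb. fold X in Hb.
    assert (HUR : Rabs (dot m (U R)) <= K * (h * h)).
    { rewrite dot_comm. eapply Rle_trans; [apply abs_dot_unit; auto|]. rewrite HUn. auto. }
    rewrite <- E in Hb.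
    assert (Hb2 : h * Rabs X <= eta * (h + K * (h * h)) + K * (h * h)).
    { replace (h * Rabs X) with (Rabs ((t' - t) * X)) by (rewrite Rabs_mult, Hth; ring).
      pose proof (Rabs_triang ((t' - t) * X + dot m (U R)) (- dot m (U R))). rewrite Rabs_Ropp in H.
      replace ((t' - t) * X + dot m (U R) + - dot m (U R)) with ((t' - t) * X) in H by ring.
      assert (eta * vnorm (vsub (c t') (c t)) <= eta * (h + K * (h * h))) by (apply Rmult_le_compat_l; lra). lra. }
    assert (Hk : (eta + 1) * K * h <= eta).
    { assert ((eta+1)*K*h <= (eta+1)*(K+1)*h) by (apply Rmult_le_compat_r; [lra| apply Rmult_le_compat_l; lra]).
      assert ((eta+1)*(K+1)*h <= (eta+1)*(K+1)*(eta/((eta+1)*(K+1)))) by (apply Rmult_le_compat_l; [nra|auto]).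
      assert ((eta+1)*(K+1)*(eta/((eta+1)*(K+1))) = eta) by (field; lra).
      lra. }
    apply Rmult_le_reg_l with h; auto.
    assert (h * ((eta+1)*K*h) <= h * eta) by (apply Rmult_le_compat_l; lra).
    lra. }
  destruct (frame_dots t Ht) as [D1 [D2 [D3 [D4 [D5 [D6 [D7 [D8 D9]]]]]]]].
  pose proof (parseval (U (ce t)) (U (normal cdd t)) (U (binormal ce cdd t)) m) as Par.
  rewrite !HUd in Par. specialize (Par D1 D2 D3 D4 D6 D8). rewrite Hm in Par. fold X Y Z in Par.
  assert (E1 : dot m (U (xi1 t)) = cos (beta t) * X + sin (beta t) * (cos (alpha t) * Y + sin (alpha t) * Z)).
  { rewrite ruling_eq. unfold uvec. repeat rewrite ?HUa, ?HUs. dot_expand. fold X Y Z. ring. }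
  assert (E2 : dot m (U (xi2 t)) = cos (betac t) * X + sin (betac t) * (cos (alpha t) * Y - sin (alpha t) * Z)).
  { rewrite ruling_eq. unfold uvec. repeat rewrite ?HUa, ?HUs. dot_expand. fold X Y Z. unfold negf. rewrite cos_neg, sin_neg. ring. }
  rewrite E1 in B1. rewrite E2 in B2.
  set (P := cos (alpha t) * Y + sin (alpha t) * Z) in *. set (Q := cos (alpha t) * Y - sin (alpha t) * Z).
  fold Q in B2.
  assert (HcX : forall be, Rabs (cos be * X) <= 2 * eta).
  { intros be. rewrite Rabs_mult. pose proof (COS_bound be). assert (Rabs (cos be) <= 1) by (apply Rabs_le; lra).
    pose proof (Rabs_pos X). pose proof (Rabs_pos (cos be)). nra. }
  assert (HP : sg * Rabs P <= 3 * eta).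
  { pose proof (HcX (beta t)). pose proof (Rabs_triang (cos (beta t) * X + sin (beta t) * P) (- (cos (beta t) * X))).
    rewrite Rabs_Ropp in H0. replace (cos (beta t) * X + sin (beta t) * P + - (cos (beta t) * X)) with (sin (beta t) * P) in H0 by ring.
    rewrite Rabs_mult, (Rabs_pos_eq (sin (beta t))) in H0 by lra.
    assert (sg * Rabs P <= sin (beta t) * Rabs P) by (apply Rmult_le_compat_r; auto using Rabs_pos). lra. }
  assert (HQ : sg * Rabs Q <= 3 * eta).
  { pose proof (HcX (betac t)). pose proof (Rabs_triang (cos (betac t) * X + sin (betac t) * Q) (- (cos (betac t) * X))).
    rewrite Rabs_Ropp in H0. replace (cos (betac t) * X + sin (betac t) * Q + - (cos (betac t) * X)) with (sin (betac t) * Q) in H0 by ring.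
    rewrite Rabs_mult, (Rabs_pos_eq (sin (betac t))) in H0 by lra.
    assert (sg * Rabs Q <= sin (betac t) * Rabs Q) by (apply Rmult_le_compat_r; auto using Rabs_pos). lra. }
  assert (HY : sg * sg * Rabs Y <= 3 * eta).
  { assert (2 * (cos (alpha t) * Y) = P + Q) by (unfold P, Q; ring).
    assert (Rabs (2 * (cos (alpha t) * Y)) <= Rabs P + Rabs Q) by (rewrite H; apply Rabs_triang).
    rewrite Rabs_mult, Rabs_mult, (Rabs_pos_eq 2), (Rabs_pos_eq (cos (alpha t))) in H0 by lra.
    assert (sg * Rabs Y <= cos (alpha t) * Rabs Y) by (apply Rmult_le_compat_r; auto using Rabs_pos).
    nra. }
  assert (HZ : sg * sg * Rabs Z <= 3 * eta).
  { assert (2 * (sin (alpha t) * Z) = P - Q) by (unfold P, Q; ring).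
    assert (Rabs (2 * (sin (alpha t) * Z)) <= Rabs P + Rabs Q).
    { rewrite H. unfold Rminus. eapply Rle_trans; [apply Rabs_triang|]. rewrite Rabs_Ropp. lra. }
    rewrite Rabs_mult, Rabs_mult, (Rabs_pos_eq 2) in H0 by lra.
    pose proof (abs_sin_ge t sg A4).
    assert (sg * Rabs Z <= Rabs (sin (alpha t)) * Rabs Z) by (apply Rmult_le_compat_r; auto using Rabs_pos).
    nra. }
  assert (Hq : 0 < sg * sg) by nra.
  assert (HY' : Rabs Y <= 3 / 10) by (apply Rmult_le_reg_l with (sg * sg); auto; unfold eta in HY; lra).
  assert (HZ' : Rabs Z <= 3 / 10) by (apply Rmult_le_reg_l with (sg * sg); auto; unfold eta in HZ; lra).
  assert (HX' : Rabs X <= 1 / 5) by (unfold eta in BX; nra).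
  assert (forall x, x * x = Rabs x * Rabs x) as Sq by (intros; rewrite <- Rabs_mult, Rabs_pos_eq; [ring|apply sq_nonneg]).
  rewrite (Sq X), (Sq Y), (Sq Z) in Par. pose proof (Rabs_pos X). pose proof (Rabs_pos Y). pose proof (Rabs_pos Z).
  nra.
Qed.

Lemma c_in_phi delta t : 0 < delta -> a <= t <= b -> phi_img a b c ce cdd alpha beta betac delta (c t).
Proof. intros Hd Ht. exists t, 0. split; auto. left. split; [lra|]. rewrite strip_zero; auto. Qed.

Lemma step1 rho eps1 k0 mr : KLP rho eps1 k0 mr -> forall eps, 0 < eps <= eps1 -> forall delta, 0 < delta <= eps ->
  forall (T U : R3 -> R3), (forall p q, vsub (T p) (T q) = U (vsub p q)) ->
  (forall x y, dot (U x) (U y) = dot x y) -> (forall k x, U (vscale k x) = vscale k (U x)) ->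
  (forall x y, U (vadd x y) = vadd (U x) (U y)) ->
  (forall p, phi_img a b c ce cdd alpha beta betac delta p -> psi_img a b c ce cdd alpha beta betac eps (T p)) ->
  forall t, a <= t <= b -> exists s, a <= s <= b /\ T (c t) = c s.
Proof.
  intros HKL eps Heps delta Hdelta T U HTU HUd HUs HUa Hin t Ht.
  assert (HUn : forall x, vnorm (U x) = vnorm x) by (intros x; unfold vnorm; rewrite HUd; auto).
  destruct (Hin _ (c_in_phi delta t ltac:(lra) Ht)) as [s0 [w0 [Hs0 [[Hw0 Hq]|[Hw0 Hq]]]]].
  - destruct (Req_dec w0 0) as [Hz|Hz].
    + exists s0. split; auto. rewrite Hq, Hz, strip_zero. auto.
    + exfalso. destruct (uvec_dots (negf alpha) (negf alpha_d) betac Hd2 HLa2 HLad2 Hal2 Hbetac s0 Hs0) as [_ [_ [_ [_ [_ [M6 _]]]]]].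
      apply (rich U HUd HUs HUa delta t _ ltac:(lra) Ht M6).
      intros eta Heta. destruct (flat2 rho eps1 k0 mr HKL eps Heps s0 w0 Hs0 ltac:(lra) eta Heta) as [r [Hr Hf]].
      exists r. split; auto. intros p Hp Hpr.
      rewrite <- HTU, <- HUn, <- HTU. rewrite Hq. apply Hf.
      + apply Hin; auto.
      + rewrite <- Hq, HTU, HUn. auto.
  - exfalso. destruct (uvec_dots alpha alpha_d beta Halpha_d HLa HLad Halpha Hbeta s0 Hs0) as [_ [_ [_ [_ [_ [M6 _]]]]]].
    apply (rich U HUd HUs HUa delta t _ ltac:(lra) Ht M6).
    intros eta Heta. destruct (flat1 rho eps1 k0 mr HKL eps Heps s0 w0 Hs0 Hw0 eta Heta) as [r [Hr Hf]].
    exists r. split; auto. intros p Hp Hpr.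
    rewrite <- HTU, <- HUn, <- HTU. rewrite Hq. apply Hf.
    + apply Hin; auto.
    + rewrite <- Hq, HTU, HUn. auto.
Qed.

Lemma step3_core (X : R -> R3) s w v k0 K Kx sg :
  a <= s <= b -> 0 < k0 -> 0 <= K -> 0 <= Kx -> 0 < v ->
  k0 * (Rabs (s - a) + Rabs w) <= v ->
  vnorm (vsub (vsub (c s) (c a)) (vscale (s - a) (ce a))) <= K * ((s - a) * (s - a)) ->
  vnorm (vsub (X s) (X a)) <= Kx * Rabs (s - a) ->
  w * (sin (alpha a) * dot (binormal ce cdd a) (X a)) <= 0 ->
  v * (sg * sg) <= sin (alpha a) * dot (binormal ce cdd a) (vsub (vadd (c s) (vscale w (X s))) (c a)) ->
  k0 * k0 * (sg * sg) <= (K + Kx) * v.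
Proof.
  intros Hs Hk0 HK HKx Hv Hb HR HX Hsign Hl.
  set (D := Rabs (s - a)) in *. pose proof (Rabs_pos (s - a)) as HD. fold D in HD. pose proof (Rabs_pos w).
  assert (HD2 : (s - a) * (s - a) = D * D) by (unfold D; rewrite <- Rabs_mult, Rabs_pos_eq; [ring|apply sq_nonneg]).
  rewrite HD2 in HR.
  set (R := vsub (vsub (c s) (c a)) (vscale (s - a) (ce a))) in *.
  assert (E : vsub (vadd (c s) (vscale w (X s))) (c a) = vadd (vadd R (vscale (s - a) (ce a))) (vadd (vscale w (X a)) (vscale w (vsub (X s) (X a))))).
  { unfold R. apply R3_ext; unfold vsub, vadd, vscale; simpl; ring. }
  rewrite E in Hl. dot_expand_in Hl. rewrite (dot_comm (binormal ce cdd a) (ce a)), frame_eb in Hl.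
  destruct (frame_dots a ltac:(lra)) as [_ [_ [D3 _]]].
  pose proof (abs_dot_unit R _ D3) as H1. pose proof (abs_dot_unit (vsub (X s) (X a)) _ D3) as H2.
  rewrite dot_comm in H1, H2. rewrite dot_subr in H2.
  pose proof (SIN_bound (alpha a)). assert (Hsa : Rabs (sin (alpha a)) <= 1) by (apply Rabs_le; lra).
  assert (T1 : sin (alpha a) * dot (binormal ce cdd a) R <= K * (D * D)).
  { eapply Rle_trans; [apply Rle_abs|]. rewrite Rabs_mult.
    apply Rle_trans with (1 * vnorm R); [apply Rmult_le_compat; auto using Rabs_pos|lra]. }
  assert (T2 : sin (alpha a) * (w * (dot (binormal ce cdd a) (X s) - dot (binormal ce cdd a) (X a))) <= Rabs w * (Kx * D)).
  { eapply Rle_trans; [apply Rle_abs|]. rewrite !Rabs_mult.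
    apply Rle_trans with (1 * (Rabs w * vnorm (vsub (X s) (X a)))).
    apply Rmult_le_compat; auto using Rabs_pos. apply Rmult_le_pos; apply Rabs_pos.
    apply Rmult_le_compat_l; auto using Rabs_pos. rewrite Rmult_1_l. apply Rmult_le_compat_l; auto using Rabs_pos. }
  assert (Hl2 : v * (sg * sg) <= K * (D * D) + Rabs w * (Kx * D)).
  { eapply Rle_trans; [exact Hl|]. ring_simplify. ring_simplify in T1. ring_simplify in T2. ring_simplify in Hsign. lra. }
  assert (k0 * D <= v) by nra. assert (k0 * Rabs w <= v) by nra.
  assert (k0 * k0 * (K * (D * D)) <= K * (v * v)).
  { apply Rmult_le_compat_l with (r := K) in H; [|auto]. replace (k0 * k0 * (K * (D * D))) with (K * ((k0 * D) * (k0 * D))) by ring.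
    apply Rmult_le_compat_l; auto. apply Rmult_le_compat; nra. }
  assert (k0 * k0 * (Rabs w * (Kx * D)) <= Kx * (v * v)).
  { replace (k0 * k0 * (Rabs w * (Kx * D))) with (Kx * ((k0 * Rabs w) * (k0 * D))) by ring.
    apply Rmult_le_compat_l; auto. apply Rmult_le_compat; nra. }
  assert (k0 * k0 * (v * (sg * sg)) <= (K + Kx) * (v * v)).
  { assert (0 <= k0 * k0) by nra. apply Rmult_le_compat_l with (r := k0 * k0) in Hl2; auto. nra. }
  apply Rmult_le_reg_l with v; auto. nra.
Qed.

Lemma step3 rho eps1 k0 mr : KLP rho eps1 k0 mr -> forall eps, 0 < eps <= eps1 -> forall delta, 0 < delta <= eps ->
  (forall p, phi_img a b c ce cdd alpha beta betac delta p -> psi_img a b c ce cdd alpha beta betac eps p) -> False.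
Proof.
  intros [Hrho [He1 [Hk0 [Hmr [H4 [KS1 [KS2 [KC KF]]]]]]]] eps Heps delta Hdelta Hin.
  assert (Ha : a <= a <= b) by lra.
  destruct both_angles as [sg [Hsg [Hsg1 HA]]]. destruct (HA a Ha) as [A1 [A2 [A3 A4]]].
  destruct taylor_c as [K [HK HT]].
  destruct (LBv_lip a b _ (xi_LB alpha alpha_d beta Halpha_d HLa HLad Halpha Hbeta)) as [Kx1 [HKx1 Lx1]].
  destruct (LBv_lip a b _ (xi_LB (negf alpha) (negf alpha_d) betac Hd2 HLa2 HLad2 Hal2 Hbetac)) as [Kx2 [HKx2 Lx2]].
  set (q := k0 * k0 * (sg * sg)). assert (Hq : 0 < q) by (unfold q; repeat apply Rmult_lt_0_compat; auto).
  set (v := Rmin (Rmin delta (mr / 2)) (q / (K + Kx1 + Kx2 + 1)) / 2).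
  assert (Hv : 0 < v) by (unfold v; apply Rdiv_lt_0_compat; [repeat apply Rmin_glb_lt; try lra; apply Rdiv_lt_0_compat; lra|lra]).
  assert (Hv1 : v < delta) by (unfold v; pose proof (Rmin_l (Rmin delta (mr / 2)) (q / (K + Kx1 + Kx2 + 1))); pose proof (Rmin_l delta (mr / 2)); lra).
  assert (Hv2 : v < mr / 2) by (unfold v; pose proof (Rmin_l (Rmin delta (mr / 2)) (q / (K + Kx1 + Kx2 + 1))); pose proof (Rmin_r delta (mr / 2)); lra).
  assert (Hv3 : (K + Kx1 + Kx2 + 1) * v < q).
  { assert (0 < q / (K + Kx1 + Kx2 + 1)) by (apply Rdiv_lt_0_compat; lra).
    assert (Hvq : v < q / (K + Kx1 + Kx2 + 1)) by (unfold v; pose proof (Rmin_r (Rmin delta (mr / 2)) (q / (K + Kx1 + Kx2 + 1))); lra).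
    apply Rmult_lt_compat_l with (r := K + Kx1 + Kx2 + 1) in Hvq; [|lra].
    replace ((K + Kx1 + Kx2 + 1) * (q / (K + Kx1 + Kx2 + 1))) with q in Hvq by (field; lra). auto. }
  assert (Hp : phi_img a b c ce cdd alpha beta betac delta (F1 a v)) by (exists a, v; split; auto; left; split; [lra|auto]).
  destruct (xi_dots alpha alpha_d beta Halpha_d HLa HLad Halpha Hbeta a Ha) as [_ [_ [_ [B1 _]]]].
  destruct (xi_dots (negf alpha) (negf alpha_d) betac Hd2 HLa2 HLad2 Hal2 Hbetac a Ha) as [_ [_ [_ [B2 _]]]].
  assert (SN : sin (negf alpha a) = - sin (alpha a)) by (unfold negf; apply sin_neg). rewrite SN in B2.
  assert (Hl : v * (sg * sg) <= sin (alpha a) * dot (binormal ce cdd a) (vsub (F1 a v) (c a))).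
  { replace (vsub (F1 a v) (c a)) with (vscale v (xi1 a)) by (apply R3_ext; unfold strip, vsub, vadd, vscale; simpl; ring).
    rewrite dot_scaler, B1. assert (sg * sg <= sin (beta a) * (sin (alpha a) * sin (alpha a))) by (apply Rmult_le_compat; lra).
    nra. }
  assert (Hn : vnorm (vsub (F1 a v) (c a)) = v).
  { replace (vsub (F1 a v) (c a)) with (vscale v (xi1 a)) by (apply R3_ext; unfold strip, vsub, vadd, vscale; simpl; ring).
    rewrite vnorm_scale, xi1_unit, Rabs_pos_eq; lra. }
  assert (Hca : c a = vadd (c a) (vscale 0 (xi1 a))) by (apply R3_ext; unfold vadd, vscale; simpl; ring).
  assert (Hca2 : c a = vadd (c a) (vscale 0 (xi2 a))) by (apply R3_ext; unfold vadd, vscale; simpl; ring).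
  assert (H0e : Rabs 0 <= eps1) by (rewrite Rabs_R0; lra).
  destruct (Hin _ Hp) as [s [w [Hs [[Hw Hpe]|[Hw Hpe]]]]]; rewrite Hpe in Hl, Hn.
  - assert (Hwa : Rabs w <= eps1) by (rewrite Rabs_pos_eq; lra).
    destruct (Rle_lt_dec (Rabs (s - a)) rho) as [Hnear|Hfar].
    + pose proof (KS2 s a w 0 Hs Ha Hnear Hwa) as HK2. rewrite strip_zero, Rminus_0_r, Hn in HK2.
      pose proof (step3_core xi2 s w v k0 K Kx2 sg Hs Hk0 HK HKx2 Hv HK2 (HT s a Hs Ha) (Lx2 s a Hs Ha)) as C.
      assert (w * (sin (alpha a) * dot (binormal ce cdd a) (xi2 a)) <= 0).
      { rewrite B2. assert (0 <= w * (sin (betac a) * (sin (alpha a) * sin (alpha a)))) by (apply Rmult_le_pos; [lra|]; apply Rmult_le_pos; [lra|apply sq_nonneg]). nra. }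
      specialize (C H Hl). assert (0 <= Kx1 * v) by (apply Rmult_le_pos; lra). unfold q in Hv3. lra.
    + pose proof (KF s a Hs Ha Hfar). rewrite Hca in Hn. unfold strip in Hn.
      pose proof (far_any _ _ s a w 0 mr eps1 (xi2_unit s Hs) (xi1_unit a Ha) H H4 Hwa H0e). lra.
  - assert (Hwa : Rabs w <= eps1) by (rewrite Rabs_left; lra).
    destruct (Rle_lt_dec (Rabs (s - a)) rho) as [Hnear|Hfar].
    + pose proof (KS1 s a w 0 Hs Ha Hnear Hwa) as HK1. rewrite strip_zero, Rminus_0_r, Hn in HK1.
      pose proof (step3_core xi1 s w v k0 K Kx1 sg Hs Hk0 HK HKx1 Hv HK1 (HT s a Hs Ha) (Lx1 s a Hs Ha)) as C.
      assert (w * (sin (alpha a) * dot (binormal ce cdd a) (xi1 a)) <= 0).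
      { rewrite B1. assert (0 <= sin (beta a) * (sin (alpha a) * sin (alpha a))) by (apply Rmult_le_pos; [lra|apply sq_nonneg]). nra. }
      specialize (C H Hl). assert (0 <= Kx2 * v) by (apply Rmult_le_pos; lra). unfold q in Hv3. lra.
    + pose proof (KF s a Hs Ha Hfar). rewrite Hca in Hn. unfold strip in Hn.
      pose proof (far_any _ _ s a w 0 mr eps1 (xi1_unit s Hs) (xi1_unit a Ha) H H4 Hwa H0e). lra.
Qed.

Lemma main_result : no_symmetry a b c -> exists eps0, 0 < eps0 /\
    forall eps, 0 < eps <= eps0 ->
    forall delta, 0 < delta <= eps ->
      ~ (exists T, isometry T /\
           forall p, phi_img a b c ce cdd alpha beta betac delta p ->
                     psi_img a b c ce cdd alpha beta betac eps (T p)).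
Proof.
  intros Hsym. destruct KLP_exists as [rho [eps1 [k0 [mr HK]]]].
  assert (He1 : 0 < eps1) by (destruct HK as [_ [H _]]; auto).
  exists eps1. split; auto. intros eps Heps delta Hdelta [T [HTi Hin]].
  destruct (iso_lin T HTi) as [U [HTU [HUd [HUs HUa]]]].
  pose proof (step1 rho eps1 k0 mr HK eps Heps delta Hdelta T U HTU HUd HUs HUa Hin) as S1.
  pose proof (step2 T HTi S1) as S2.
  pose proof (Hsym T HTi S1 S2) as Hid.
  apply (step3 rho eps1 k0 mr HK eps Heps delta Hdelta).
  intros p Hp. rewrite <- (Hid p). auto.
Qed.

End Main.

End Curve.

Theorem corollary1p2
  (a b : R) (c ce cdd nd : R -> R3) (alpha alpha_d beta betac : R -> R)
  (Hab : a < b)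
  (Hc_smooth : smooth3 c)
  (Hce : forall t, deriv3 c ce t)
  (Hcdd : forall t, deriv3 ce cdd t)
  (Harc : forall t, a <= t <= b -> vnorm (ce t) = 1)
  (Hemb : forall s t, a <= s <= b -> a <= t <= b -> c s = c t -> s = t)
  (Hkappa : forall t, a <= t <= b -> 0 < curvature cdd t)
  (Hnd : forall t, a <= t <= b -> deriv3 (normal cdd) nd t)
  (Halpha_smooth : smooth alpha)
  (Halpha_d : forall t, derivable_pt_lim alpha t (alpha_d t))
  (Halpha : forall t, a <= t <= b -> 0 < Rabs (alpha t) < PI / 2)
  (Hbeta : developable_angle a b ce cdd nd alpha alpha_d beta)
  (Hbetac : developable_angle a b ce cdd nd (negf alpha) (negf alpha_d) betac)
  (Hsym : no_symmetry a b c) :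
  exists eps0, 0 < eps0 /\
    forall eps, 0 < eps <= eps0 ->
    forall delta, 0 < delta <= eps ->
      ~ (exists T, isometry T /\
           forall p, phi_img a b c ce cdd alpha beta betac delta p ->
                     psi_img a b c ce cdd alpha beta betac eps (T p)).
Proof.
  exact (main_result a b c ce cdd nd Hab Hc_smooth Hce Hcdd Harc Hemb Hkappa Hnd alpha alpha_d beta betac
    Halpha_smooth Halpha_d Halpha Hbeta Hbetac Hsym).
Qed.
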